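(* Let $X$ be a Banach space, $\Omega\in L(X)$ an isomorphism of $X$ onto itself, $\tau>0$ and $\varphi\in C^{2}([-2\tau,0],X)$. Then the unique classical solution of $$\ddot x(t)-\Omega^{2}x(t-2\tau)=0\ (t\ge0),\qquad x(t)=\varphi(t)\ (t\in[-2\tau,0])$$ is given for $t\in[-2\tau,\infty)$ by $$x(t)=x_1(t+\tau;\Omega)\varphi(-2\tau)+x_2(t+2\tau;\Omega)\dot\varphi(-2\tau)+\int_{-2\tau}^{0}x_2(t-s;\Omega)\ddot\varphi(s)\,ds.$$
   Context: For $A\in L(X)$, $\exp_\tau(t;A)=0$ for $t<-\tau$, $=\mathrm{id}_X$ for $-\tau\le t<0$, and $=\sum_{j=0}^{k}A^{j}\frac{(t-(j-1)\tau)^{j}}{j!}$ for $(k-1)\tau\le t<k\tau$, $k\in\mathbb N$. For $t\in\mathbb R$, $x_1(t;\Omega):=\tfrac12(\exp_\tau(t;\Omega)+\exp_\tau(t;-\Omega))$ and $x_2(t;\Omega):=\tfrac12\Omega^{-1}(\exp_\tau(t;\Omega)-\exp_\tau(t;-\Omega))$; in particular $x_2(t;\Omega)=0$ for all $t<0$ and $x_1(t;\Omega)=0$ for $t<-\tau$. A classical solution of $\ddot x(t)-\Omega^2x(t-2\tau)=f(t)$ ($t\ge0$), $x=\varphi$ on $[-2\tau,0]$, is a function $x\in C^{1}([-2\tau,\infty),X)\cap C^{2}([-2\tau,0],X)\cap C^{2}([0,\infty),X)$ (one-sided derivatives at endpoints) satisfying these equations pointwise. *)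

(* Defs.v *)
From Stdlib Require Import Reals Lra ZArith.
Open Scope R_scope.

Record NormedSpace := mkNormedSpace {
  ns_car :> Type;
  ns_zero : ns_car;
  ns_add : ns_car -> ns_car -> ns_car;
  ns_opp : ns_car -> ns_car;
  ns_scal : R -> ns_car -> ns_car;
  ns_norm : ns_car -> R;
  ns_add_assoc : forall u v w, ns_add u (ns_add v w) = ns_add (ns_add u v) w;
  ns_add_comm : forall u v, ns_add u v = ns_add v u;
  ns_add_zero : forall u, ns_add u ns_zero = u;
  ns_add_opp : forall u, ns_add u (ns_opp u) = ns_zero;
  ns_scal_assoc : forall a b u, ns_scal a (ns_scal b u) = ns_scal (a * b) u;
  ns_scal_one : forall u, ns_scal 1 u = u;
  ns_scal_distr_l : forall a u v, ns_scal a (ns_add u v) = ns_add (ns_scal a u) (ns_scal a v);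
  ns_scal_distr_r : forall a b u, ns_scal (a + b) u = ns_add (ns_scal a u) (ns_scal b u);
  ns_norm_zero_iff : forall u, ns_norm u = 0 <-> u = ns_zero;
  ns_norm_triangle : forall u v, ns_norm (ns_add u v) <= ns_norm u + ns_norm v;
  ns_norm_scal : forall a u, ns_norm (ns_scal a u) = Rabs a * ns_norm u
}.

Arguments ns_zero {_}.
Arguments ns_add {_}.
Arguments ns_opp {_}.
Arguments ns_scal {_}.
Arguments ns_norm {_}.

Definition ns_sub {X : NormedSpace} (u v : X) : X := ns_add u (ns_opp v).

Definition complete (X : NormedSpace) : Prop :=
  forall u : nat -> X,
    (forall eps, eps > 0 -> exists N, forall m n, (m >= N)%nat -> (n >= N)%nat ->
        ns_norm (ns_sub (u m) (u n)) < eps) ->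
    exists l : X, forall eps, eps > 0 -> exists N, forall n, (n >= N)%nat ->
        ns_norm (ns_sub (u n) l) < eps.

Definition is_linear {X : NormedSpace} (A : X -> X) : Prop :=
  (forall u v, A (ns_add u v) = ns_add (A u) (A v)) /\
  (forall a u, A (ns_scal a u) = ns_scal a (A u)).

Definition is_bounded_op {X : NormedSpace} (A : X -> X) : Prop :=
  exists M, forall v, ns_norm (A v) <= M * ns_norm v.

Definition in_LX {X : NormedSpace} (A : X -> X) : Prop :=
  is_linear A /\ is_bounded_op A.

Definition is_isomorphism {X : NormedSpace} (O Oinv : X -> X) : Prop :=
  in_LX O /\ in_LX Oinv /\ (forall v, Oinv (O v) = v) /\ (forall v, O (Oinv v) = v).

Definition has_deriv_within {X : NormedSpace} (D : R -> Prop) (f : R -> X) (t : R) (v : X) : Prop :=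
  forall eps, eps > 0 -> exists delta, delta > 0 /\
    forall h, h <> 0 -> Rabs h < delta -> D (t + h) ->
      ns_norm (ns_sub (ns_sub (f (t + h)) (f t)) (ns_scal h v)) <= eps * Rabs h.

Definition continuous_on {X : NormedSpace} (D : R -> Prop) (f : R -> X) : Prop :=
  forall t, D t -> forall eps, eps > 0 -> exists delta, delta > 0 /\
    forall s, D s -> Rabs (s - t) < delta -> ns_norm (ns_sub (f s) (f t)) < eps.

Definition is_C1_on {X : NormedSpace} (D : R -> Prop) (f f' : R -> X) : Prop :=
  (forall t, D t -> has_deriv_within D f t (f' t)) /\ continuous_on D f'.

Definition is_C2_on {X : NormedSpace} (D : R -> Prop) (f f' f'' : R -> X) : Prop :=
  is_C1_on D f f' /\ is_C1_on D f' f''.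

Fixpoint vsum {X : NormedSpace} (f : nat -> X) (k : nat) : X :=
  match k with
  | O => f O
  | S k' => ns_add (vsum f k') (f (S k'))
  end.

Definition is_RInt {X : NormedSpace} (f : R -> X) (a b : R) (I : X) : Prop :=
  forall eps, eps > 0 -> exists delta, delta > 0 /\
    forall (n : nat) (p xi : nat -> R),
      p O = a -> p n = b ->
      (forall i, (i < n)%nat -> p i <= xi i <= p (S i) /\ p (S i) - p i < delta) ->
      ns_norm (ns_sub
        (vsum (fun i => ns_scal (p (S i) - p i) (f (xi i))) (pred n)) I) < eps.

Fixpoint opow {X : NormedSpace} (A : X -> X) (j : nat) (v : X) : X :=
  match j with
  | O => v
  | S j' => A (opow A j' v)
  end.

(* Delayed exponential exp_tau(t; A), applied to a vector v.
   For t >= 0 the k with (k-1)tau <= t < k tau is k = up (t/tau). *)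
Definition exp_tau {X : NormedSpace} (tau : R) (A : X -> X) (t : R) (v : X) : X :=
  if Rlt_dec t (- tau) then ns_zero
  else if Rlt_dec t 0 then v
  else vsum (fun j => ns_scal ((t - (INR j - 1) * tau) ^ j / INR (fact j)) (opow A j v))
            (Z.to_nat (up (t / tau))).

Definition x1 {X : NormedSpace} (tau : R) (O : X -> X) (t : R) (v : X) : X :=
  ns_scal (1/2) (ns_add (exp_tau tau O t v) (exp_tau tau (fun w => ns_opp (O w)) t v)).

Definition x2 {X : NormedSpace} (tau : R) (O Oinv : X -> X) (t : R) (v : X) : X :=
  ns_scal (1/2) (Oinv (ns_sub (exp_tau tau O t v) (exp_tau tau (fun w => ns_opp (O w)) t v))).

Definition classical_solution {X : NormedSpace} (tau : R) (O : X -> X) (f phi x : R -> X) : Prop :=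
  exists xd xdd_neg xdd_pos : R -> X,
    is_C1_on (fun t => - (2 * tau) <= t) x xd /\
    is_C2_on (fun t => - (2 * tau) <= t <= 0) x xd xdd_neg /\
    is_C2_on (fun t => 0 <= t) x xd xdd_pos /\
    (forall t, 0 <= t -> ns_sub (xdd_pos t) (O (O (x (t - 2 * tau)))) = f t) /\
    (forall t, - (2 * tau) <= t <= 0 -> x t = phi t).

(* Main.v *)
Require Import Defs.
From Stdlib Require Import Reals Lra Lia List Classical FunctionalExtensionality ClassicalEpsilon Factorial ZArith.
Open Scope R_scope.

Arguments ns_add_assoc {_}. Arguments ns_add_comm {_}. Arguments ns_add_zero {_}.
Arguments ns_add_opp {_}. Arguments ns_scal_assoc {_}. Arguments ns_scal_one {_}.
Arguments ns_scal_distr_l {_}. Arguments ns_scal_distr_r {_}. Arguments ns_norm_zero_iff {_}.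
Arguments ns_norm_triangle {_}. Arguments ns_norm_scal {_}.

Lemma vadd0l {X : NormedSpace} (u : X) : ns_add ns_zero u = u.
Proof. rewrite ns_add_comm; apply ns_add_zero. Qed.

Lemma vadd_cancel_l {X : NormedSpace} (a b c : X) : ns_add a b = ns_add a c -> b = c.
Proof.
  intros H.
  assert (H2 : ns_add (ns_opp a) (ns_add a b) = ns_add (ns_opp a) (ns_add a c)) by (rewrite H; reflexivity).
  rewrite !ns_add_assoc in H2.
  rewrite (ns_add_comm (ns_opp a) a), ns_add_opp, !vadd0l in H2. exact H2.
Qed.

Lemma vscal0 {X : NormedSpace} (u : X) : ns_scal 0 u = ns_zero.
Proof.
  apply (vadd_cancel_l (ns_scal 0 u)).
  rewrite ns_add_zero, <- ns_scal_distr_r. f_equal; ring.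
Qed.

Lemma vopp_scal {X : NormedSpace} (u : X) : ns_opp u = ns_scal (-1) u.
Proof.
  apply (vadd_cancel_l u).
  rewrite ns_add_opp. symmetry.
  transitivity (ns_add (ns_scal 1 u) (ns_scal (-1) u)); [now rewrite ns_scal_one|].
  rewrite <- ns_scal_distr_r. replace (1 + -1) with 0 by ring. now rewrite vscal0.
Qed.

Lemma vscal0r {X : NormedSpace} (a : R) : ns_scal a (@ns_zero X) = ns_zero.
Proof.
  rewrite <- (vscal0 (@ns_zero X)) at 1. rewrite ns_scal_assoc. replace (a*0) with 0 by ring. apply vscal0.
Qed.

Lemma vnorm0 {X : NormedSpace} : ns_norm (@ns_zero X) = 0.
Proof. apply ns_norm_zero_iff. reflexivity. Qed.

Lemma vnorm_opp {X : NormedSpace} (u : X) : ns_norm (ns_opp u) = ns_norm u.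
Proof. rewrite vopp_scal, ns_norm_scal. replace (Rabs (-1)) with 1 by (rewrite Rabs_left; lra). ring. Qed.

Lemma vnorm_nonneg {X : NormedSpace} (u : X) : 0 <= ns_norm u.
Proof.
  pose proof (ns_norm_triangle u (ns_opp u)) as H.
  rewrite ns_add_opp, vnorm0, vnorm_opp in H. lra.
Qed.

Lemma vopp_opp {X : NormedSpace} (u : X) : ns_opp (ns_opp u) = u.
Proof. rewrite !vopp_scal, ns_scal_assoc. replace (-1 * -1) with 1 by ring. apply ns_scal_one. Qed.

Lemma vopp_add {X : NormedSpace} (u v : X) : ns_opp (ns_add u v) = ns_add (ns_opp u) (ns_opp v).
Proof. rewrite !vopp_scal. apply ns_scal_distr_l. Qed.

Lemma vopp0 {X : NormedSpace} : ns_opp (@ns_zero X) = ns_zero.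
Proof. rewrite vopp_scal. apply vscal0r. Qed.

Lemma vscal_opp {X : NormedSpace} (a : R) (u : X) : ns_scal a (ns_opp u) = ns_opp (ns_scal a u).
Proof. rewrite !vopp_scal, !ns_scal_assoc. f_equal; ring. Qed.

Lemma vscal_oppl {X : NormedSpace} (a : R) (u : X) : ns_scal (-a) u = ns_opp (ns_scal a u).
Proof. rewrite !vopp_scal, !ns_scal_assoc. f_equal; ring. Qed.

Lemma vadd_opp_l {X : NormedSpace} (u : X) : ns_add (ns_opp u) u = ns_zero.
Proof. rewrite ns_add_comm. apply ns_add_opp. Qed.

Lemma vsub_self {X : NormedSpace} (u : X) : ns_sub u u = ns_zero.
Proof. apply ns_add_opp. Qed.

Lemma vsub0 {X : NormedSpace} (u : X) : ns_sub u ns_zero = u.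
Proof. unfold ns_sub. rewrite vopp0. apply ns_add_zero. Qed.

Lemma vsub_eq {X : NormedSpace} (u v : X) : ns_sub u v = ns_zero -> u = v.
Proof.
  unfold ns_sub; intros H.
  assert (H2 : ns_add (ns_add u (ns_opp v)) v = ns_add ns_zero v) by (rewrite H; reflexivity).
  rewrite <- ns_add_assoc, vadd_opp_l, ns_add_zero, vadd0l in H2. exact H2.
Qed.

Lemma vnorm_eq0 {X : NormedSpace} (u : X) : ns_norm u = 0 -> u = ns_zero.
Proof. apply ns_norm_zero_iff. Qed.

Lemma vnorm_small0 {X : NormedSpace} (u : X) : (forall e, e > 0 -> ns_norm u <= e) -> u = ns_zero.
Proof.
  intros H. apply vnorm_eq0. pose proof (vnorm_nonneg u).
  destruct (Rle_lt_or_eq_dec 0 (ns_norm u) H0) as [Hl|Hl]; [|auto].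
  specialize (H (ns_norm u / 2) ltac:(lra)). lra.
Qed.

Lemma vsub_opp {X : NormedSpace} (u v : X) : ns_opp (ns_sub u v) = ns_sub v u.
Proof. unfold ns_sub. rewrite vopp_add, vopp_opp. apply ns_add_comm. Qed.

Lemma vnorm_sub_sym {X : NormedSpace} (u v : X) : ns_norm (ns_sub u v) = ns_norm (ns_sub v u).
Proof. rewrite <- vsub_opp, vnorm_opp. reflexivity. Qed.

Lemma vsub_add_sub {X : NormedSpace} (u v w : X) : ns_add (ns_sub u v) (ns_sub v w) = ns_sub u w.
Proof.
  unfold ns_sub. rewrite <- ns_add_assoc. f_equal. rewrite ns_add_assoc, vadd_opp_l. apply vadd0l.
Qed.

Lemma vnorm_tri_sub {X : NormedSpace} (u v w : X) : ns_norm (ns_sub u w) <= ns_norm (ns_sub u v) + ns_norm (ns_sub v w).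
Proof. rewrite <- (vsub_add_sub u v w). apply ns_norm_triangle. Qed.

Lemma vnorm_sub_le {X : NormedSpace} (u v : X) : ns_norm (ns_sub u v) <= ns_norm u + ns_norm v.
Proof. unfold ns_sub. rewrite <- (vnorm_opp v). apply ns_norm_triangle. Qed.

Lemma vnorm_scal_le {X : NormedSpace} (a : R) (u : X) : ns_norm (ns_scal a u) = Rabs a * ns_norm u.
Proof. apply ns_norm_scal. Qed.

Lemma vadd_swap {X : NormedSpace} (a b c d : X) :
  ns_add (ns_add a b) (ns_add c d) = ns_add (ns_add a c) (ns_add b d).
Proof.
  rewrite <- !ns_add_assoc. f_equal. rewrite !ns_add_assoc. f_equal. apply ns_add_comm.
Qed.

Lemma vsub_add_distr {X : NormedSpace} (a b c d : X) :
  ns_sub (ns_add a b) (ns_add c d) = ns_add (ns_sub a c) (ns_sub b d).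
Proof. unfold ns_sub. rewrite vopp_add. apply vadd_swap. Qed.

Lemma vscal_sub {X : NormedSpace} (r : R) (a b : X) : ns_scal r (ns_sub a b) = ns_sub (ns_scal r a) (ns_scal r b).
Proof. unfold ns_sub. rewrite ns_scal_distr_l, vscal_opp. reflexivity. Qed.

Lemma vscal_subr {X : NormedSpace} (r s : R) (a : X) : ns_scal (r - s) a = ns_sub (ns_scal r a) (ns_scal s a).
Proof. unfold ns_sub, Rminus. rewrite ns_scal_distr_r, vscal_oppl. reflexivity. Qed.

Lemma vadd_sub_r {X : NormedSpace} (a b : X) : ns_sub (ns_add a b) b = a.
Proof. unfold ns_sub. rewrite <- ns_add_assoc, ns_add_opp. apply ns_add_zero. Qed.

Lemma vsub_add_r {X : NormedSpace} (a b : X) : ns_add (ns_sub a b) b = a.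
Proof. unfold ns_sub. rewrite <- ns_add_assoc, vadd_opp_l. apply ns_add_zero. Qed.

Lemma vsub_sub {X : NormedSpace} (a b c : X) : ns_sub (ns_sub a b) c = ns_sub a (ns_add b c).
Proof. unfold ns_sub. rewrite vopp_add, ns_add_assoc. reflexivity. Qed.

Lemma vsub_0l {X : NormedSpace} (a : X) : ns_sub ns_zero a = ns_opp a.
Proof. unfold ns_sub. apply vadd0l. Qed.

Lemma vsum_ext {X : NormedSpace} (f g : nat -> X) k :
  (forall i, (i <= k)%nat -> f i = g i) -> vsum f k = vsum g k.
Proof.
  induction k; intros H; simpl. apply H; lia.
  rewrite IHk by (intros; apply H; lia). rewrite H by lia. reflexivity.
Qed.

Lemma vsum_add {X : NormedSpace} (f g : nat -> X) k :
  vsum (fun i => ns_add (f i) (g i)) k = ns_add (vsum f k) (vsum g k).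
Proof. induction k; simpl. reflexivity. rewrite IHk. apply vadd_swap. Qed.

Lemma vsum_sub {X : NormedSpace} (f g : nat -> X) k :
  vsum (fun i => ns_sub (f i) (g i)) k = ns_sub (vsum f k) (vsum g k).
Proof. induction k; simpl. reflexivity. rewrite IHk. symmetry. apply vsub_add_distr. Qed.

Lemma vsum_scal {X : NormedSpace} (a : R) (f : nat -> X) k :
  vsum (fun i => ns_scal a (f i)) k = ns_scal a (vsum f k).
Proof. induction k; simpl. reflexivity. rewrite IHk, ns_scal_distr_l. reflexivity. Qed.

Lemma vsum_zero {X : NormedSpace} (f : nat -> X) k :
  (forall i, (i <= k)%nat -> f i = ns_zero) -> vsum f k = ns_zero.
Proof.
  induction k; intros H; simpl. apply H; lia.
  rewrite IHk by (intros; apply H; lia). rewrite H by lia. apply ns_add_zero.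
Qed.

Lemma vsum_shift {X : NormedSpace} (f : nat -> X) k :
  vsum f (S k) = ns_add (f O) (vsum (fun i => f (S i)) k).
Proof.
  induction k. reflexivity.
  change (vsum f (S (S k))) with (ns_add (vsum f (S k)) (f (S (S k)))).
  rewrite IHk. simpl. rewrite ns_add_assoc. reflexivity.
Qed.

Lemma vsum_extend {X : NormedSpace} (f : nat -> X) k N :
  (k <= N)%nat -> (forall i, (k < i)%nat -> (i <= N)%nat -> f i = ns_zero) ->
  vsum f N = vsum f k.
Proof.
  intros Hk H. induction N.
  - assert (k = 0)%nat by lia. subst. reflexivity.
  - destruct (Nat.eq_dec k (S N)). subst; reflexivity.
    simpl. rewrite IHN by (lia || (intros; apply H; lia)). rewrite H by lia. apply ns_add_zero.
Qed.

Lemma vsum_norm {X : NormedSpace} (f : nat -> X) k :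
  ns_norm (vsum f k) <= sum_f_R0 (fun i => ns_norm (f i)) k.
Proof.
  induction k; simpl. lra.
  eapply Rle_trans. apply ns_norm_triangle. lra.
Qed.

Lemma lin_zero {X : NormedSpace} (A : X -> X) : is_linear A -> A ns_zero = ns_zero.
Proof. intros [_ H]. rewrite <- (vscal0 (@ns_zero X)) at 1. rewrite H. apply vscal0. Qed.

Lemma lin_opp {X : NormedSpace} (A : X -> X) u : is_linear A -> A (ns_opp u) = ns_opp (A u).
Proof. intros [_ H]. rewrite !vopp_scal. apply H. Qed.

Lemma lin_add {X : NormedSpace} (A : X -> X) u v : is_linear A -> A (ns_add u v) = ns_add (A u) (A v).
Proof. intros [H _]. apply H. Qed.

Lemma lin_scal {X : NormedSpace} (A : X -> X) a u : is_linear A -> A (ns_scal a u) = ns_scal a (A u).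
Proof. intros [_ H]. apply H. Qed.

Lemma lin_sub {X : NormedSpace} (A : X -> X) u v : is_linear A -> A (ns_sub u v) = ns_sub (A u) (A v).
Proof. intros HA. unfold ns_sub. rewrite lin_add, lin_opp; auto. Qed.

Lemma lin_vsum {X : NormedSpace} (A : X -> X) (f : nat -> X) k :
  is_linear A -> A (vsum f k) = vsum (fun i => A (f i)) k.
Proof. intros HA. induction k; simpl. reflexivity. rewrite lin_add, IHk; auto. Qed.

Lemma bounded_abs {X : NormedSpace} (A : X -> X) : is_bounded_op A ->
  exists M, 0 <= M /\ forall v, ns_norm (A v) <= M * ns_norm v.
Proof.
  intros [M HM]. exists (Rabs M). split. apply Rabs_pos.
  intros v. eapply Rle_trans. apply HM. apply Rmult_le_compat_r. apply vnorm_nonneg. apply RRle_abs.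
Qed.

Lemma opow_LX {X : NormedSpace} (A : X -> X) j : in_LX A -> in_LX (opow A j).
Proof.
  intros HA. induction j; simpl.
  - split. split; reflexivity. exists 1. intros; lra.
  - destruct IHj as [[H1 H2] H3]. destruct HA as [HL HB]. split. split.
    + intros u v. rewrite H1. apply lin_add; auto.
    + intros a u. rewrite H2. apply lin_scal; auto.
    + destruct (bounded_abs _ HB) as [M [HM0 HM]]. destruct (bounded_abs _ H3) as [M' [HM0' HM']].
      exists (M * M'). intros v. eapply Rle_trans. apply HM.
      rewrite Rmult_assoc. apply Rmult_le_compat_l; auto.
Qed.

Lemma opow_neg {X : NormedSpace} (O : X -> X) j v : is_linear O ->
  opow (fun w => ns_opp (O w)) j v = ns_scal ((-1)^j) (opow O j v).
Proof.
  intros HO. induction j; simpl. symmetry. apply ns_scal_one.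
  rewrite IHj, lin_scal, vopp_scal, ns_scal_assoc by auto. f_equal; try ring.
Qed.

Lemma opow_lin_eq {X : NormedSpace} (A : X -> X) j : in_LX A -> is_linear (opow A j).
Proof. intros H. apply (opow_LX A j H). Qed.

Lemma real_ind (a b : R) (Q : R -> Prop) :
  a <= b -> Q a ->
  (forall r r', a <= r' <= r -> Q r -> Q r') ->
  (forall r, a <= r < b -> Q r -> exists d, d > 0 /\ Q (r + d)) ->
  (forall r, a < r <= b -> (forall r', a <= r' < r -> Q r') -> Q r) ->
  Q b.
Proof.
  intros Hab Qa Hmono Hstep Hlim.
  set (S := fun r => a <= r <= b /\ Q r).
  assert (Hb : bound S) by (exists b; intros r [[_ H] _]; exact H).
  assert (He : exists r, S r) by (exists a; split; [lra|exact Qa]).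
  destruct (completeness S Hb He) as [c [Hub Hlub]].
  assert (Hac : a <= c) by (apply Hub; split; [lra|exact Qa]).
  assert (Hcb : c <= b) by (apply Hlub; intros r [[_ H] _]; exact H).
  assert (Hbelow : forall r', a <= r' < c -> Q r').
  { intros r' Hr'. destruct (classic (exists s, S s /\ r' < s)) as [[s [[Hs1 Hs2] Hs3]]|Hn].
    - apply (Hmono s); auto. lra.
    - exfalso. assert (c <= r'); [|lra]. apply Hlub. intros s Hs.
      destruct (Rle_or_lt s r'); auto. exfalso; apply Hn; exists s; auto. }
  assert (Qc : Q c).
  { destruct (Req_dec a c). subst; auto. apply Hlim. lra. auto. }
  destruct (Req_dec c b). subst; auto.
  exfalso. destruct (Hstep c ltac:(lra) Qc) as [d [Hd Qd]].
  assert (S (Rmin (c + d) b)).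
  { split. split. apply Rmin_glb; lra. apply Rmin_r. apply (Hmono (c+d)); auto.
    split. apply Rmin_glb; lra. apply Rmin_l. }
  apply Hub in H0. unfold Rmin in H0. destruct (Rle_dec (c + d) b); lra.
Qed.

Lemma vsplit3 {X : NormedSpace} (a b m c : X) (x y : R) :
  ns_sub (ns_sub a m) (ns_scal (x + y) c) =
  ns_add (ns_sub (ns_sub a b) (ns_scal x c)) (ns_sub (ns_sub b m) (ns_scal y c)).
Proof.
  rewrite <- vsub_add_distr, vsub_add_sub, ns_scal_distr_r. reflexivity.
Qed.

Lemma vsplit2 {X : NormedSpace} (a b c d : X) :
  ns_sub (ns_sub a b) c = ns_add (ns_sub (ns_sub a b) d) (ns_sub d c).
Proof. rewrite vsub_add_sub. reflexivity. Qed.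

Lemma vneg_diff {X : NormedSpace} (a b v : X) h :
  ns_sub (ns_sub a b) (ns_scal h v) = ns_opp (ns_sub (ns_sub b a) (ns_scal (-h) v)).
Proof.
  rewrite vscal_oppl. unfold ns_sub. rewrite !vopp_add, !vopp_opp. f_equal. apply ns_add_comm.
Qed.

Lemma le_eps (x y : R) : (forall e, e > 0 -> x <= y + e) -> x <= y.
Proof.
  intros H. destruct (Rle_or_lt x y); auto. specialize (H ((x - y)/2) ltac:(lra)). lra.
Qed.

Lemma mvi {X : NormedSpace} (D : R -> Prop) (G G' : R -> X) (c : X) (M s t : R) :
  s <= t -> (forall r, s <= r <= t -> D r) ->
  (forall r, s <= r <= t -> has_deriv_within D G r (G' r)) ->
  (forall r, s <= r <= t -> ns_norm (ns_sub (G' r) c) <= M) ->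
  ns_norm (ns_sub (ns_sub (G t) (G s)) (ns_scal (t - s) c)) <= M * (t - s).
Proof.
  intros Hst HD Hder HM.
  apply le_eps. intros e0 He0. set (e := e0 / (t - s + 1)).
  assert (He : e > 0) by (unfold e; apply Rdiv_lt_0_compat; lra).
  assert (Hee : e * (t - s) <= e0).
  { assert (e * (t - s + 1) = e0) by (unfold e; field; lra). nra. }
  set (Q := fun r => forall r', s <= r' <= r -> r' <= t ->
     ns_norm (ns_sub (ns_sub (G r') (G s)) (ns_scal (r' - s) c)) <= (M + e) * (r' - s)).
  assert (HQ : Q t).
  { apply (real_ind s t Q Hst).
    - intros r' Hr' _. replace r' with s by lra. rewrite vsub_self, Rminus_diag_eq, vscal0, vsub0, vnorm0 by auto. lra.
    - intros r r' Hr Qr r'' H1 H2. apply Qr; lra.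
    - intros r Hr Qr. destruct (Hder r ltac:(lra) e He) as [d [Hd Hdd]].
      exists (d/2). split. lra. intros r' Hr' Hr't.
      destruct (Rle_or_lt r' r) as [Hle|Hlt]. apply Qr; lra.
      replace (r' - s) with ((r' - r) + (r - s)) by ring.
      rewrite (vsplit3 _ (G r)). eapply Rle_trans. apply ns_norm_triangle.
      rewrite Rmult_plus_distr_l. apply Rplus_le_compat; [|apply Qr; lra].
      rewrite (vsplit2 _ _ _ (ns_scal (r' - r) (G' r))). eapply Rle_trans. apply ns_norm_triangle.
      replace ((M + e) * (r' - r)) with (e * (r'-r) + M * (r'-r)) by ring. apply Rplus_le_compat.
      + specialize (Hdd (r' - r) ltac:(lra)). replace (r + (r' - r)) with r' in Hdd by ring.
        rewrite Rabs_right in Hdd by lra. apply Hdd; [lra | apply HD; lra].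
      + rewrite <- vscal_sub, ns_norm_scal, Rabs_right by lra. rewrite (Rmult_comm M).
        apply Rmult_le_compat_l. lra. apply HM; lra.
    - intros r Hr Hbel r' Hr' Hr't. destruct (Rlt_or_le r' r) as [Hlt|Hge]. apply (Hbel r'); lra.
      assert (r' = r) by lra. subst r'. clear Hge.
      destruct (Hder r ltac:(lra) e He) as [d [Hd Hdd]].
      set (h := Rmin (d/2) ((r - s)/2)).
      assert (Hh : 0 < h /\ h <= d/2 /\ h <= (r-s)/2).
      { unfold h. split. apply Rmin_glb_lt; lra. split. apply Rmin_l. apply Rmin_r. }
      replace (r - s) with (h + ((r - h) - s)) by ring.
      rewrite (vsplit3 _ (G (r - h))). eapply Rle_trans. apply ns_norm_triangle.
      rewrite Rmult_plus_distr_l. apply Rplus_le_compat; [|apply (Hbel (r - h)); lra].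
      rewrite (vsplit2 _ _ _ (ns_scal h (G' r))). eapply Rle_trans. apply ns_norm_triangle.
      replace ((M + e) * h) with (e * h + M * h) by ring. apply Rplus_le_compat.
      + specialize (Hdd (-h) ltac:(lra)). replace (r + - h) with (r - h) in Hdd by ring.
        rewrite Rabs_left in Hdd by lra.
        assert (Hx : ns_sub (ns_sub (G r) (G (r - h))) (ns_scal h (G' r)) =
                     ns_opp (ns_sub (ns_sub (G (r - h)) (G r)) (ns_scal (- h) (G' r)))).
        { apply vneg_diff. }
        rewrite Hx, vnorm_opp. replace (e * h) with (e * - - h) by ring. apply Hdd; [lra | apply HD; lra].
      + rewrite <- vscal_sub, ns_norm_scal, Rabs_right by lra. rewrite (Rmult_comm M).
        apply Rmult_le_compat_l. lra. apply HM; lra. }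
  specialize (HQ t ltac:(lra) ltac:(lra)). nra.
Qed.

Lemma heine {X : NormedSpace} (f : R -> X) (a b : R) :
  a <= b -> continuous_on (fun t => a <= t <= b) f ->
  forall e, e > 0 -> exists d, d > 0 /\ forall u v, a <= u <= b -> a <= v <= b -> Rabs (u - v) < d ->
    ns_norm (ns_sub (f u) (f v)) <= e.
Proof.
  intros Hab Hc e He.
  set (Q := fun r => exists d, d > 0 /\ forall u v, a <= u <= r -> a <= v <= r -> u <= b -> v <= b ->
           Rabs (u - v) < d -> ns_norm (ns_sub (f u) (f v)) <= e).
  assert (HQ : Q b).
  { apply (real_ind a b Q Hab).
    - exists 1. split. lra. intros u v Hu Hv _ _ _. replace u with a by lra. replace v with a by lra.
      rewrite vsub_self, vnorm0. lra.
    - intros r r' Hr [d [Hd H]]. exists d. split; auto. intros u v Hu Hv Hub Hvb Huv. apply H; auto; lra.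
    - intros r Hr [d [Hd H]]. destruct (Hc r ltac:(lra) (e/2) ltac:(lra)) as [eta [Heta Hcr]].
      exists (eta/2). split. lra. exists (Rmin d (eta/2)). split. apply Rmin_glb_lt; lra.
      intros u v Hu Hv Hub Hvb Huv.
      assert (Hmin1 := Rmin_l d (eta/2)). assert (Hmin2 := Rmin_r d (eta/2)).
      destruct (Rle_or_lt u r); destruct (Rle_or_lt v r).
      + apply H; auto; try lra.
      + eapply Rle_trans. apply (vnorm_tri_sub _ (f r)). apply Rlt_le.
        replace e with (e/2 + e/2) by field. apply Rplus_lt_compat.
        * apply Hcr. lra. apply Rabs_def1; apply Rabs_def2 in Huv; lra.
        * rewrite vnorm_sub_sym. apply Hcr. lra. apply Rabs_def1; apply Rabs_def2 in Huv; lra.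
      + eapply Rle_trans. apply (vnorm_tri_sub _ (f r)). apply Rlt_le.
        replace e with (e/2 + e/2) by field. apply Rplus_lt_compat.
        * apply Hcr. lra. apply Rabs_def1; apply Rabs_def2 in Huv; lra.
        * rewrite vnorm_sub_sym. apply Hcr. lra. apply Rabs_def1; apply Rabs_def2 in Huv; lra.
      + eapply Rle_trans. apply (vnorm_tri_sub _ (f r)). apply Rlt_le.
        replace e with (e/2 + e/2) by field. apply Rplus_lt_compat.
        * apply Hcr. lra. apply Rabs_def1; apply Rabs_def2 in Huv; lra.
        * rewrite vnorm_sub_sym. apply Hcr. lra. apply Rabs_def1; apply Rabs_def2 in Huv; lra.
    - intros r Hr Hbel. destruct (Hc r ltac:(lra) (e/2) ltac:(lra)) as [eta [Heta Hcr]].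
      set (r' := Rmax a (r - eta/2)).
      assert (Hr' : a <= r' < r /\ r - eta/2 <= r').
      { unfold r'. split. split. apply Rmax_l. apply Rmax_lub_lt; lra. apply Rmax_r. }
      destruct (Hbel r' ltac:(lra)) as [d [Hd H]].
      exists (Rmin d (eta/2)). split. apply Rmin_glb_lt; lra.
      intros u v Hu Hv Hub Hvb Huv.
      assert (Hmin1 := Rmin_l d (eta/2)). assert (Hmin2 := Rmin_r d (eta/2)).
      destruct (Rle_or_lt u r'); destruct (Rle_or_lt v r').
      + apply H; auto; try lra.
      + eapply Rle_trans. apply (vnorm_tri_sub _ (f r)). apply Rlt_le.
        replace e with (e/2 + e/2) by field. apply Rplus_lt_compat.
        * apply Hcr. lra. apply Rabs_def1; apply Rabs_def2 in Huv; lra.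
        * rewrite vnorm_sub_sym. apply Hcr. lra. apply Rabs_def1; apply Rabs_def2 in Huv; lra.
      + eapply Rle_trans. apply (vnorm_tri_sub _ (f r)). apply Rlt_le.
        replace e with (e/2 + e/2) by field. apply Rplus_lt_compat.
        * apply Hcr. lra. apply Rabs_def1; apply Rabs_def2 in Huv; lra.
        * rewrite vnorm_sub_sym. apply Hcr. lra. apply Rabs_def1; apply Rabs_def2 in Huv; lra.
      + eapply Rle_trans. apply (vnorm_tri_sub _ (f r)). apply Rlt_le.
        replace e with (e/2 + e/2) by field. apply Rplus_lt_compat.
        * apply Hcr. lra. apply Rabs_def1; apply Rabs_def2 in Huv; lra.
        * rewrite vnorm_sub_sym. apply Hcr. lra. apply Rabs_def1; apply Rabs_def2 in Huv; lra. }
  destruct HQ as [d [Hd H]]. exists d. split; auto. intros u v Hu Hv Huv. apply H; auto; lra.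
Qed.

Inductive vexp :=
| VAtom (n : nat) | VZero | VAdd (a b : vexp) | VOpp (a : vexp) | VSub (a b : vexp) | VScal (r : R) (a : vexp).

Fixpoint vinterp {X : NormedSpace} (env : list X) (e : vexp) : X :=
  match e with
  | VAtom n => nth n env ns_zero
  | VZero => ns_zero
  | VAdd a b => ns_add (vinterp env a) (vinterp env b)
  | VOpp a => ns_opp (vinterp env a)
  | VSub a b => ns_sub (vinterp env a) (vinterp env b)
  | VScal r a => ns_scal r (vinterp env a)
  end.

Fixpoint ladd (l1 l2 : list R) : list R :=
  match l1, l2 with
  | nil, _ => l2
  | _, nil => l1
  | a :: l1', b :: l2' => (a + b) :: ladd l1' l2'
  end.

Definition lscal (r : R) (l : list R) : list R := map (fun a => r * a) l.

Fixpoint lunit (n : nat) : list R :=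
  match n with O => 1 :: nil | S n' => 0 :: lunit n' end.

Fixpoint vnorm (e : vexp) : list R :=
  match e with
  | VAtom n => lunit n
  | VZero => nil
  | VAdd a b => ladd (vnorm a) (vnorm b)
  | VOpp a => lscal (-1) (vnorm a)
  | VSub a b => ladd (vnorm a) (lscal (-1) (vnorm b))
  | VScal r a => lscal r (vnorm a)
  end.

Fixpoint lsum {X : NormedSpace} (env : list X) (l : list R) : X :=
  match l with
  | nil => ns_zero
  | c :: l' => ns_add (ns_scal c (hd ns_zero env)) (lsum (tl env) l')
  end.

Lemma lsum_add {X : NormedSpace} (env : list X) l1 l2 :
  lsum env (ladd l1 l2) = ns_add (lsum env l1) (lsum env l2).
Proof.
  revert env l2. induction l1; intros env l2; simpl. now rewrite vadd0l.
  destruct l2; simpl. now rewrite ns_add_zero.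
  rewrite IHl1, ns_scal_distr_r. apply vadd_swap.
Qed.

Lemma lsum_scal {X : NormedSpace} (env : list X) r l :
  lsum env (lscal r l) = ns_scal r (lsum env l).
Proof.
  revert env. induction l; intros env; simpl. now rewrite vscal0r.
  unfold lscal in IHl. rewrite IHl, ns_scal_distr_l, ns_scal_assoc. reflexivity.
Qed.

Lemma lsum_unit {X : NormedSpace} (env : list X) n :
  lsum env (lunit n) = nth n env ns_zero.
Proof.
  revert env. induction n; intros env; simpl.
  - rewrite ns_scal_one, ns_add_zero. destruct env; reflexivity.
  - rewrite vscal0, vadd0l, IHn. destruct env. destruct n; reflexivity. reflexivity.
Qed.

Lemma vnorm_sound {X : NormedSpace} (env : list X) e : vinterp env e = lsum env (vnorm e).
Proof.
  induction e; simpl.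
  - symmetry; apply lsum_unit.
  - reflexivity.
  - rewrite lsum_add, IHe1, IHe2. reflexivity.
  - rewrite lsum_scal, IHe, vopp_scal. reflexivity.
  - rewrite lsum_add, lsum_scal, IHe1, IHe2. unfold ns_sub. rewrite vopp_scal. reflexivity.
  - rewrite lsum_scal, IHe. reflexivity.
Qed.

Fixpoint lzero (l : list R) : Prop :=
  match l with nil => True | a :: l' => a = 0 /\ lzero l' end.

Fixpoint leq2 (l1 l2 : list R) : Prop :=
  match l1 with
  | nil => lzero l2
  | a :: l1' => match l2 with
                | nil => a = 0 /\ lzero l1'
                | b :: l2' => a = b /\ leq2 l1' l2'
                end
  end.

Lemma lsum_zero {X : NormedSpace} (env : list X) l : lzero l -> lsum env l = ns_zero.
Proof.
  revert env. induction l; intros env H; simpl. reflexivity.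
  destruct H as [-> H]. rewrite vscal0, vadd0l. apply IHl; auto.
Qed.

Lemma leq2_sound {X : NormedSpace} (env : list X) l1 l2 : leq2 l1 l2 -> lsum env l1 = lsum env l2.
Proof.
  revert env l2. induction l1; intros env l2 H.
  - simpl in H. symmetry. apply lsum_zero; auto.
  - destruct l2.
    + simpl in H. destruct H as [-> H]. simpl. rewrite vscal0, vadd0l. apply lsum_zero; auto.
    + simpl in H. destruct H as [-> H]. simpl. f_equal. apply IHl1; auto.
Qed.

Lemma vexp_eq {X : NormedSpace} (env : list X) e1 e2 :
  leq2 (vnorm e1) (vnorm e2) -> vinterp env e1 = vinterp env e2.
Proof. intros H. rewrite !vnorm_sound. apply leq2_sound; auto. Qed.

Ltac vlookup t l :=
  match l with
  | cons t _ => constr:(O)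
  | cons _ ?l' => let n := vlookup t l' in constr:(S n)
  end.

Ltac vcollect t acc :=
  match t with
  | ns_zero => acc
  | ns_add ?a ?b => let acc1 := vcollect a acc in vcollect b acc1
  | ns_opp ?a => vcollect a acc
  | ns_sub ?a ?b => let acc1 := vcollect a acc in vcollect b acc1
  | ns_scal _ ?a => vcollect a acc
  | _ => match acc with
         | context [cons t _] => acc
         | _ => constr:(app acc (cons t nil))
         end
  end.

Ltac vreify t env :=
  match t with
  | ns_zero => constr:(VZero)
  | ns_add ?a ?b => let ea := vreify a env in let eb := vreify b env in constr:(VAdd ea eb)
  | ns_opp ?a => let ea := vreify a env in constr:(VOpp ea)
  | ns_sub ?a ?b => let ea := vreify a env in let eb := vreify b env in constr:(VSub ea eb)
  | ns_scal ?r ?a => let ea := vreify a env in constr:(VScal r ea)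
  | _ => let n := vlookup t env in constr:(VAtom n)
  end.

Ltac vring :=
  match goal with
  | |- @eq (ns_car ?X) ?a ?b =>
    let env0 := vcollect a (@nil (ns_car X)) in
    let env1 := vcollect b env0 in
    let env := eval cbn [app] in env1 in
    let ea := vreify a env in
    let eb := vreify b env in
    change (vinterp env ea = vinterp env eb); apply vexp_eq;
    cbn [vnorm ladd lscal lunit map leq2 lzero]; repeat split; ring
  end.

Lemma test {X : NormedSpace} (a b c : X) (r s : R) :
  ns_sub (ns_add (ns_scal r a) b) (ns_scal (r - s) (ns_add a c)) = ns_add (ns_sub b (ns_scal (r - s) c)) (ns_scal s a).
Proof. vring. Qed.

Ltac vfield :=
  match goal with
  | |- @eq (ns_car ?X) ?a ?b =>
    let env0 := vcollect a (@nil (ns_car X)) in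
    let env1 := vcollect b env0 in
    let env := eval cbn [app] in env1 in
    let ea := vreify a env in
    let eb := vreify b env in
    change (vinterp env ea = vinterp env eb); apply vexp_eq;
    cbn [vnorm ladd lscal lunit map leq2 lzero]; repeat split; field
  end.

Lemma deriv_mono {X : NormedSpace} (D D' : R -> Prop) (f : R -> X) t v :
  (forall s, D' s -> D s) -> has_deriv_within D f t v -> has_deriv_within D' f t v.
Proof.
  intros HD H e He. destruct (H e He) as [d [Hd Hd']]. exists d. split; auto.
Qed.

Lemma deriv_ext_loc {X : NormedSpace} (D : R -> Prop) (f g : R -> X) t v eta :
  eta > 0 -> (forall s, D s -> Rabs (s - t) < eta -> f s = g s) -> D t ->
  has_deriv_within D f t v -> has_deriv_within D g t v.
Proof.
  intros Heta Heq Dt H e He. destruct (H e He) as [d [Hd Hd']].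
  exists (Rmin d eta). split. apply Rmin_glb_lt; lra.
  intros h Hh Hhd Dh. assert (Hm1 := Rmin_l d eta). assert (Hm2 := Rmin_r d eta).
  rewrite <- !Heq; auto.
  - apply Hd'; auto. lra.
  - rewrite Rminus_diag_eq, Rabs_R0 by auto. lra.
  - replace (t + h - t) with h by ring. lra.
Qed.

Lemma deriv_ext {X : NormedSpace} (D : R -> Prop) (f g : R -> X) t v :
  (forall s, D s -> f s = g s) -> D t ->
  has_deriv_within D f t v -> has_deriv_within D g t v.
Proof. intros Heq Dt. apply (deriv_ext_loc D f g t v 1). lra. intros; auto. auto. Qed.

Lemma deriv_ext_v {X : NormedSpace} (D : R -> Prop) (f : R -> X) t v w :
  v = w -> has_deriv_within D f t v -> has_deriv_within D f t w.
Proof. intros ->; auto. Qed.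

Lemma deriv_add {X : NormedSpace} (D : R -> Prop) (f g : R -> X) t u v :
  has_deriv_within D f t u -> has_deriv_within D g t v ->
  has_deriv_within D (fun s => ns_add (f s) (g s)) t (ns_add u v).
Proof.
  intros Hf Hg e He. destruct (Hf (e/2) ltac:(lra)) as [d1 [Hd1 H1]]. destruct (Hg (e/2) ltac:(lra)) as [d2 [Hd2 H2]].
  exists (Rmin d1 d2). split. apply Rmin_glb_lt; lra.
  intros h Hh Hhd Dh. assert (Hm1 := Rmin_l d1 d2). assert (Hm2 := Rmin_r d1 d2).
  rewrite vsub_add_distr, ns_scal_distr_l, vsub_add_distr.
  eapply Rle_trans. apply ns_norm_triangle.
  replace (e * Rabs h) with (e/2 * Rabs h + e/2 * Rabs h) by field.
  apply Rplus_le_compat; [apply H1|apply H2]; auto; lra.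
Qed.

Lemma deriv_scal {X : NormedSpace} (D : R -> Prop) (f : R -> X) t v a :
  has_deriv_within D f t v ->
  has_deriv_within D (fun s => ns_scal a (f s)) t (ns_scal a v).
Proof.
  intros Hf e He. assert (Ha := Rabs_pos a).
  destruct (Hf (e / (Rabs a + 1)) ltac:(apply Rdiv_lt_0_compat; lra)) as [d [Hd H]].
  exists d. split; auto. intros h Hh Hhd Dh.
  rewrite ns_scal_assoc, Rmult_comm, <- ns_scal_assoc, <- !vscal_sub, ns_norm_scal.
  eapply Rle_trans. apply Rmult_le_compat_l. auto. apply H; auto.
  assert (Habs := Rabs_pos h).
  assert (Rabs a * (e / (Rabs a + 1)) <= e).
  { assert (e / (Rabs a + 1) * (Rabs a + 1) = e) by (field; lra). nra. }
  nra.
Qed.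


Lemma deriv_opp {X : NormedSpace} (D : R -> Prop) (f : R -> X) t v :
  has_deriv_within D f t v ->
  has_deriv_within D (fun s => ns_opp (f s)) t (ns_opp v).
Proof.
  intros H. rewrite vopp_scal.
  assert (E : (fun s => ns_opp (f s)) = (fun s => ns_scal (-1) (f s))).
  { apply functional_extensionality. intros; apply vopp_scal. }
  rewrite E. apply deriv_scal; auto.
Qed.

Lemma deriv_sub {X : NormedSpace} (D : R -> Prop) (f g : R -> X) t u v :
  has_deriv_within D f t u -> has_deriv_within D g t v ->
  has_deriv_within D (fun s => ns_sub (f s) (g s)) t (ns_sub u v).
Proof. intros Hf Hg. apply deriv_add; auto. apply deriv_opp; auto. Qed.

Lemma deriv_const {X : NormedSpace} (D : R -> Prop) (c : X) t :
  has_deriv_within D (fun _ => c) t ns_zero.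
Proof.
  intros e He. exists 1. split. lra. intros h _ _ _.
  rewrite vsub_self, vscal0r, vsub0, vnorm0. assert (0 <= Rabs h) by apply Rabs_pos. nra.
Qed.

Lemma deriv_lin {X : NormedSpace} (D : R -> Prop) (A : X -> X) (f : R -> X) t v :
  in_LX A -> has_deriv_within D f t v -> has_deriv_within D (fun s => A (f s)) t (A v).
Proof.
  intros [HL HB] Hf e He. destruct (bounded_abs A HB) as [M [HM0 HM]].
  destruct (Hf (e / (M + 1)) ltac:(apply Rdiv_lt_0_compat; lra)) as [d [Hd H]].
  exists d. split; auto. intros h Hh Hhd Dh.
  rewrite <- lin_scal, <- !lin_sub by auto. eapply Rle_trans. apply HM.
  eapply Rle_trans. apply Rmult_le_compat_l. auto. apply H; auto.
  assert (Habs := Rabs_pos h).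
  assert (M * (e / (M + 1)) <= e).
  { assert (e / (M + 1) * (M + 1) = e) by (field; lra). nra. }
  nra.
Qed.

Lemma deriv_vsum {X : NormedSpace} (D : R -> Prop) (f f' : nat -> R -> X) t k :
  (forall i, (i <= k)%nat -> has_deriv_within D (f i) t (f' i t)) ->
  has_deriv_within D (fun s => vsum (fun i => f i s) k) t (vsum (fun i => f' i t) k).
Proof.
  induction k; intros H; simpl. apply H; lia.
  apply deriv_add. apply IHk. intros; apply H; lia. apply H; lia.
Qed.

Lemma deriv_cscal {X : NormedSpace} (D : R -> Prop) (c : R -> R) (w : X) t l :
  derivable_pt_lim c t l -> has_deriv_within D (fun s => ns_scal (c s) w) t (ns_scal l w).
Proof.
  intros Hc e He. assert (Hw := vnorm_nonneg w).
  destruct (Hc (e / (ns_norm w + 1)) ltac:(apply Rdiv_lt_0_compat; lra)) as [[d Hd] H]. simpl in *.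
  exists d. split; auto. intros h Hh Hhd Dh.
  rewrite ns_scal_assoc, <- vscal_subr, <- vscal_subr, ns_norm_scal.
  specialize (H h Hh Hhd).
  assert (Habs : Rabs (c (t + h) - c t - h * l) <= e / (ns_norm w + 1) * Rabs h).
  { replace (c (t + h) - c t - h * l) with (((c (t + h) - c t) / h - l) * h) by (field; auto).
    rewrite Rabs_mult. apply Rmult_le_compat_r. apply Rabs_pos. lra. }
  assert (e / (ns_norm w + 1) * (ns_norm w + 1) = e) by (field; lra).
  assert (Hh0 := Rabs_pos h). assert (Hr := Rabs_pos (c (t + h) - c t - h * l)).
  eapply Rle_trans. apply Rmult_le_compat_r. auto. apply Habs. nra.
Qed.

Lemma deriv_cont {X : NormedSpace} (D : R -> Prop) (f : R -> X) t v :
  has_deriv_within D f t v -> forall e, e > 0 -> exists d, d > 0 /\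
    forall s, D s -> Rabs (s - t) < d -> ns_norm (ns_sub (f s) (f t)) <= e.
Proof.
  intros H e He. assert (Hv := vnorm_nonneg v).
  destruct (H 1 ltac:(lra)) as [d [Hd Hd']].
  exists (Rmin d (e / (ns_norm v + 2))). split. apply Rmin_glb_lt; auto. apply Rdiv_lt_0_compat; lra.
  intros s Ds Hs. assert (Hm1 := Rmin_l d (e / (ns_norm v + 2))). assert (Hm2 := Rmin_r d (e / (ns_norm v + 2))).
  destruct (Req_dec s t). subst. rewrite vsub_self, vnorm0. lra.
  specialize (Hd' (s - t) ltac:(lra) ltac:(lra)). replace (t + (s - t)) with s in Hd' by ring.
  specialize (Hd' Ds).
  assert (Hx : ns_sub (f s) (f t) = ns_add (ns_sub (ns_sub (f s) (f t)) (ns_scal (s - t) v)) (ns_scal (s - t) v)).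
  { symmetry. apply vsub_add_r. }
  rewrite Hx. eapply Rle_trans. apply ns_norm_triangle. rewrite ns_norm_scal.
  assert (e / (ns_norm v + 2) * (ns_norm v + 2) = e) by (field; lra).
  assert (Ha := Rabs_pos (s - t)). nra.
Qed.

Lemma deriv_prod {X : NormedSpace} (D : R -> Prop) (c : R -> R) (F : R -> X) t l F' :
  derivable_pt_lim c t l -> has_deriv_within D F t F' ->
  has_deriv_within D (fun s => ns_scal (c s) (F s)) t (ns_add (ns_scal l (F t)) (ns_scal (c t) F')).
Proof.
  intros Hc HF e He.
  assert (HF' := vnorm_nonneg F'). assert (HFt := vnorm_nonneg (F t)).
  assert (Hct := Rabs_pos (c t)).
  set (K := ns_norm F' + 1).
  destruct (HF (e/3 / (Rabs (c t) + 1)) ltac:(apply Rdiv_lt_0_compat; lra)) as [d1 [Hd1 H1]].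
  destruct (HF 1 ltac:(lra)) as [d5 [Hd5 H5]].
  destruct (Hc (e/3 / (ns_norm (F t) + 1)) ltac:(apply Rdiv_lt_0_compat; lra)) as [[d2 Hd2] H2]. simpl in *.
  destruct (Hc 1 ltac:(lra)) as [[d3 Hd3] H3]. simpl in *.
  set (L := Rabs l + 1).
  assert (HL : L > 0) by (unfold L; assert (H:=Rabs_pos l); lra).
  assert (HK : K > 0) by (unfold K; lra).
  set (d4 := e / 3 / (L * K)).
  assert (Hd4 : d4 > 0) by (unfold d4; apply Rdiv_lt_0_compat; [lra| apply Rmult_lt_0_compat; lra]).
  exists (Rmin (Rmin d1 d2) (Rmin d3 (Rmin d4 d5))). split. repeat apply Rmin_glb_lt; lra.
  intros h Hh Hhd Dh.
  assert (Hm1 := Rmin_l (Rmin d1 d2) (Rmin d3 (Rmin d4 d5))). assert (Hm2 := Rmin_r (Rmin d1 d2) (Rmin d3 (Rmin d4 d5))).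
  assert (Hm3 := Rmin_l d1 d2). assert (Hm4 := Rmin_r d1 d2). assert (Hm5 := Rmin_l d3 (Rmin d4 d5)).
  assert (Hm6 := Rmin_r d3 (Rmin d4 d5)). assert (Hm7 := Rmin_l d4 d5). assert (Hm8 := Rmin_r d4 d5).
  assert (Hab := Rabs_pos h). assert (Habh : Rabs h > 0) by (apply Rabs_pos_lt; auto).
  assert (Hdec : ns_sub (ns_sub (ns_scal (c (t + h)) (F (t + h))) (ns_scal (c t) (F t)))
                    (ns_scal h (ns_add (ns_scal l (F t)) (ns_scal (c t) F'))) =
     ns_add (ns_add (ns_scal (c (t + h) - c t) (ns_sub (F (t + h)) (F t)))
                    (ns_scal (c (t + h) - c t - h * l) (F t)))
            (ns_scal (c t) (ns_sub (ns_sub (F (t + h)) (F t)) (ns_scal h F')))) by vring.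
  rewrite Hdec. clear Hdec.
  assert (B1 : Rabs (c (t + h) - c t - h * l) <= e/3 / (ns_norm (F t) + 1) * Rabs h).
  { specialize (H2 h Hh ltac:(lra)).
    replace (c (t + h) - c t - h * l) with (((c (t + h) - c t) / h - l) * h) by (field; auto).
    rewrite Rabs_mult. apply Rmult_le_compat_r. apply Rabs_pos. lra. }
  assert (B2 : Rabs (c (t + h) - c t) <= L * Rabs h).
  { specialize (H3 h Hh ltac:(lra)).
    replace (c (t + h) - c t) with (((c (t + h) - c t) / h - l) * h + l * h) by (field; auto).
    eapply Rle_trans. apply Rabs_triang. rewrite !Rabs_mult. unfold L.
    assert (H4 := Rabs_pos ((c (t + h) - c t) / h - l)). nra. }
  assert (B3 : ns_norm (ns_sub (ns_sub (F (t + h)) (F t)) (ns_scal h F')) <= e/3 / (Rabs (c t) + 1) * Rabs h).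
  { apply H1; auto; lra. }
  assert (B4 : ns_norm (ns_sub (F (t + h)) (F t)) <= K * Rabs h).
  { rewrite <- (vsub_add_r (ns_sub (F (t + h)) (F t)) (ns_scal h F')).
    eapply Rle_trans. apply ns_norm_triangle. rewrite ns_norm_scal. unfold K.
    assert (ns_norm (ns_sub (ns_sub (F (t + h)) (F t)) (ns_scal h F')) <= 1 * Rabs h) by (apply H5; auto; lra).
    nra. }
  eapply Rle_trans. apply ns_norm_triangle. eapply Rle_trans. apply Rplus_le_compat_r. apply ns_norm_triangle.
  rewrite !ns_norm_scal.
  assert (E1 : Rabs (c (t + h) - c t) * ns_norm (ns_sub (F (t + h)) (F t)) <= e/3 * Rabs h).
  { assert (Hx := Rabs_pos (c (t + h) - c t)). assert (Hy := vnorm_nonneg (ns_sub (F (t + h)) (F t))).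
    apply Rle_trans with ((L * Rabs h) * (K * Rabs h)). apply Rmult_le_compat; auto.
    assert (L * K * Rabs h <= e / 3).
    { assert (d4 * (L * K) = e/3) by (unfold d4; field; lra).
      assert (Rabs h <= d4) by lra. assert (L*K > 0) by nra. nra. }
    nra. }
  assert (E2 : Rabs (c (t + h) - c t - h * l) * ns_norm (F t) <= e/3 * Rabs h).
  { assert (Hx := Rabs_pos (c (t + h) - c t - h * l)).
    apply Rle_trans with (e/3 / (ns_norm (F t) + 1) * Rabs h * ns_norm (F t)).
    apply Rmult_le_compat_r; auto.
    assert (e / 3 / (ns_norm (F t) + 1) * (ns_norm (F t) + 1) = e/3) by (field; lra).
    assert (0 <= e/3 / (ns_norm (F t) + 1)) by (apply Rlt_le, Rdiv_lt_0_compat; lra). nra. }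
  assert (E3 : Rabs (c t) * ns_norm (ns_sub (ns_sub (F (t + h)) (F t)) (ns_scal h F')) <= e/3 * Rabs h).
  { apply Rle_trans with (Rabs (c t) * (e / 3 / (Rabs (c t) + 1) * Rabs h)).
    apply Rmult_le_compat_l; auto.
    assert (e / 3 / (Rabs (c t) + 1) * (Rabs (c t) + 1) = e/3) by (field; lra).
    assert (0 <= e/3 / (Rabs (c t) + 1)) by (apply Rlt_le, Rdiv_lt_0_compat; lra). nra. }
  lra.
Qed.

Lemma deriv_glue {X : NormedSpace} (D : R -> Prop) (f : R -> X) t v :
  has_deriv_within (fun s => D s /\ s <= t) f t v -> has_deriv_within (fun s => D s /\ t <= s) f t v ->
  has_deriv_within D f t v.
Proof.
  intros H1 H2 e He. destruct (H1 e He) as [d1 [Hd1 H1']]. destruct (H2 e He) as [d2 [Hd2 H2']].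
  exists (Rmin d1 d2). split. apply Rmin_glb_lt; lra.
  intros h Hh Hhd Dh. assert (Hm1 := Rmin_l d1 d2). assert (Hm2 := Rmin_r d1 d2).
  destruct (Rle_or_lt h 0). apply H1'; auto; try lra. split; auto; lra.
  apply H2'; auto; try lra. split; auto; lra.
Qed.

Lemma deriv_shift {X : NormedSpace} (D D' : R -> Prop) (f : R -> X) t a v :
  (forall s, D' s -> D (s - a)) -> has_deriv_within D f (t - a) v ->
  has_deriv_within D' (fun s => f (s - a)) t v.
Proof.
  intros HD H e He. destruct (H e He) as [d [Hd H']]. exists d. split; auto.
  intros h Hh Hhd Dh. replace (t + h - a) with (t - a + h) by ring. apply H'; auto.
  replace (t - a + h) with (t + h - a) by ring. auto.
Qed.

Lemma cont_of_deriv {X : NormedSpace} (D : R -> Prop) (f f' : R -> X) :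
  (forall t, D t -> has_deriv_within D f t (f' t)) -> continuous_on D f.
Proof.
  intros H t Dt e He. destruct (deriv_cont D f t (f' t) (H t Dt) (e/2) ltac:(lra)) as [d [Hd H']].
  exists d. split; auto. intros s Ds Hs. specialize (H' s Ds Hs). lra.
Qed.

Lemma cont_mono {X : NormedSpace} (D D' : R -> Prop) (f : R -> X) :
  (forall s, D' s -> D s) -> continuous_on D f -> continuous_on D' f.
Proof.
  intros HD H t Dt e He. destruct (H t (HD t Dt) e He) as [d [Hd H']]. exists d. split; auto.
Qed.

Lemma cont_ext {X : NormedSpace} (D : R -> Prop) (f g : R -> X) :
  (forall s, D s -> f s = g s) -> continuous_on D f -> continuous_on D g.
Proof.
  intros Heq H t Dt e He. destruct (H t Dt e He) as [d [Hd H']]. exists d. split; auto.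
  intros s Ds Hs. rewrite <- !Heq; auto.
Qed.

Lemma cont_add {X : NormedSpace} (D : R -> Prop) (f g : R -> X) :
  continuous_on D f -> continuous_on D g -> continuous_on D (fun s => ns_add (f s) (g s)).
Proof.
  intros Hf Hg t Dt e He. destruct (Hf t Dt (e/2) ltac:(lra)) as [d1 [Hd1 H1]].
  destruct (Hg t Dt (e/2) ltac:(lra)) as [d2 [Hd2 H2]].
  exists (Rmin d1 d2). split. apply Rmin_glb_lt; lra.
  intros s Ds Hs. assert (Hm1 := Rmin_l d1 d2). assert (Hm2 := Rmin_r d1 d2).
  rewrite vsub_add_distr. eapply Rle_lt_trans. apply ns_norm_triangle.
  replace e with (e/2 + e/2) by field. apply Rplus_lt_compat; [apply H1|apply H2]; auto; lra.
Qed.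

Lemma cont_scal {X : NormedSpace} (D : R -> Prop) (f : R -> X) a :
  continuous_on D f -> continuous_on D (fun s => ns_scal a (f s)).
Proof.
  intros Hf t Dt e He. assert (Ha := Rabs_pos a).
  destruct (Hf t Dt (e/(Rabs a + 1)) ltac:(apply Rdiv_lt_0_compat; lra)) as [d [Hd H]].
  exists d. split; auto. intros s Ds Hs. rewrite <- vscal_sub, ns_norm_scal.
  specialize (H s Ds Hs). assert (e / (Rabs a + 1) * (Rabs a + 1) = e) by (field; lra).
  assert (Hn := vnorm_nonneg (ns_sub (f s) (f t))). nra.
Qed.

Lemma cont_opp {X : NormedSpace} (D : R -> Prop) (f : R -> X) :
  continuous_on D f -> continuous_on D (fun s => ns_opp (f s)).
Proof.
  intros H. apply (cont_ext D (fun s => ns_scal (-1) (f s))). intros; symmetry; apply vopp_scal.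
  apply cont_scal; auto.
Qed.

Lemma cont_sub {X : NormedSpace} (D : R -> Prop) (f g : R -> X) :
  continuous_on D f -> continuous_on D g -> continuous_on D (fun s => ns_sub (f s) (g s)).
Proof. intros. apply cont_add; auto. apply cont_opp; auto. Qed.

Lemma cont_const {X : NormedSpace} (D : R -> Prop) (c : X) : continuous_on D (fun _ => c).
Proof. intros t Dt e He. exists 1. split. lra. intros. rewrite vsub_self, vnorm0. lra. Qed.

Lemma cont_lin {X : NormedSpace} (D : R -> Prop) (A : X -> X) (f : R -> X) :
  in_LX A -> continuous_on D f -> continuous_on D (fun s => A (f s)).
Proof.
  intros [HL HB] Hf t Dt e He. destruct (bounded_abs A HB) as [M [HM0 HM]].
  destruct (Hf t Dt (e/(M + 1)) ltac:(apply Rdiv_lt_0_compat; lra)) as [d [Hd H]].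
  exists d. split; auto. intros s Ds Hs. rewrite <- lin_sub by auto. eapply Rle_lt_trans. apply HM.
  specialize (H s Ds Hs). assert (e / (M + 1) * (M + 1) = e) by (field; lra).
  assert (Hn := vnorm_nonneg (ns_sub (f s) (f t))). nra.
Qed.

Lemma cont_vsum {X : NormedSpace} (D : R -> Prop) (f : nat -> R -> X) k :
  (forall i, (i <= k)%nat -> continuous_on D (f i)) ->
  continuous_on D (fun s => vsum (fun i => f i s) k).
Proof.
  induction k; intros H; simpl. apply H; lia.
  apply cont_add. apply IHk. intros; apply H; lia. apply H; lia.
Qed.

Lemma cont_prod {X : NormedSpace} (D : R -> Prop) (c : R -> R) (f : R -> X) :
  (forall t, D t -> continuity_pt c t) -> continuous_on D f -> continuous_on D (fun s => ns_scal (c s) (f s)).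
Proof.
  intros Hc Hf t Dt e He.
  assert (Hft := vnorm_nonneg (f t)). assert (Hct := Rabs_pos (c t)).
  destruct (Hf t Dt (e/2/(Rabs (c t) + 1)) ltac:(apply Rdiv_lt_0_compat; lra)) as [d1 [Hd1 H1]].
  destruct (Hf t Dt 1 ltac:(lra)) as [d3 [Hd3 H3]].
  destruct (Hc t Dt (e/2/(ns_norm (f t) + 2)) ltac:(apply Rdiv_lt_0_compat; lra)) as [d2 [Hd2 H2]].
  exists (Rmin d1 (Rmin d2 d3)). split. repeat apply Rmin_glb_lt; lra.
  intros s Ds Hs. assert (Hm1 := Rmin_l d1 (Rmin d2 d3)). assert (Hm2 := Rmin_r d1 (Rmin d2 d3)).
  assert (Hm3 := Rmin_l d2 d3). assert (Hm4 := Rmin_r d2 d3).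
  assert (Hdec : ns_sub (ns_scal (c s) (f s)) (ns_scal (c t) (f t)) =
    ns_add (ns_scal (c s - c t) (f s)) (ns_scal (c t) (ns_sub (f s) (f t)))) by vring.
  rewrite Hdec. eapply Rle_lt_trans. apply ns_norm_triangle. rewrite !ns_norm_scal.
  assert (Hfs : ns_norm (f s) <= ns_norm (f t) + 1).
  { specialize (H3 s Ds ltac:(lra)). rewrite <- (vsub_add_r (f s) (f t)).
    eapply Rle_trans. apply ns_norm_triangle. lra. }
  assert (Hcs : Rabs (c s - c t) < e/2/(ns_norm (f t) + 2)).
  { destruct (Req_dec s t). subst. rewrite Rminus_diag_eq, Rabs_R0 by auto. apply Rdiv_lt_0_compat; lra.
    apply (H2 s). split. split. exact I. auto. simpl. unfold R_dist. lra. }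
  specialize (H1 s Ds ltac:(lra)).
  assert (e/2/(ns_norm (f t) + 2) * (ns_norm (f t) + 2) = e/2) by (field; lra).
  assert (e/2/(Rabs (c t) + 1) * (Rabs (c t) + 1) = e/2) by (field; lra).
  assert (Hx := Rabs_pos (c s - c t)). assert (Hy := vnorm_nonneg (f s)).
  assert (Hz := vnorm_nonneg (ns_sub (f s) (f t))).
  assert (Rabs (c s - c t) * ns_norm (f s) < e/2).
  { apply Rle_lt_trans with (Rabs (c s - c t) * (ns_norm (f t) + 1)). apply Rmult_le_compat_l; auto.
    apply Rle_lt_trans with (Rabs (c s - c t) * (ns_norm (f t) + 2)). nra. nra. }
  assert (Rabs (c t) * ns_norm (ns_sub (f s) (f t)) <= e/2 * (Rabs (c t) / (Rabs (c t) + 1))).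
  { apply Rle_trans with (Rabs (c t) * (e / 2 / (Rabs (c t) + 1))). apply Rmult_le_compat_l; lra.
    right. field. lra. }
  assert (Rabs (c t) / (Rabs (c t) + 1) < 1).
  { apply (Rmult_lt_reg_r (Rabs (c t) + 1)). lra. field_simplify; lra. }
  nra.
Qed.

Lemma cont_glue {X : NormedSpace} (D : R -> Prop) (f : R -> X) a :
  continuous_on (fun s => D s /\ s <= a) f -> continuous_on (fun s => D s /\ a <= s) f ->
  continuous_on D f.
Proof.
  intros H1 H2 t Dt e He.
  destruct (Rlt_or_le t a) as [Hlt|Hge].
  - destruct (H1 t (conj Dt (Rlt_le _ _ Hlt)) e He) as [d [Hd H]].
    exists (Rmin d (a - t)). split. apply Rmin_glb_lt; lra.
    intros s Ds Hs. assert (Hm1 := Rmin_l d (a - t)). assert (Hm2 := Rmin_r d (a - t)).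
    apply H. split; auto. apply Rabs_def2 in Hs; lra. lra.
  - destruct (Rle_lt_or_eq_dec _ _ Hge) as [Hgt|Heq].
    + destruct (H2 t (conj Dt Hge) e He) as [d [Hd H]].
      exists (Rmin d (t - a)). split. apply Rmin_glb_lt; lra.
      intros s Ds Hs. assert (Hm1 := Rmin_l d (t - a)). assert (Hm2 := Rmin_r d (t - a)).
      apply H. split; auto. apply Rabs_def2 in Hs; lra. lra.
    + subst. destruct (H1 t (conj Dt (Rle_refl _)) e He) as [d1 [Hd1 H1']].
      destruct (H2 t (conj Dt (Rle_refl _)) e He) as [d2 [Hd2 H2']].
      exists (Rmin d1 d2). split. apply Rmin_glb_lt; lra.
      intros s Ds Hs. assert (Hm1 := Rmin_l d1 d2). assert (Hm2 := Rmin_r d1 d2).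
      destruct (Rle_or_lt s t). apply H1'; auto; lra. apply H2'; auto. split; auto; lra. lra.
Qed.

Lemma cont_shift {X : NormedSpace} (D D' : R -> Prop) (f : R -> X) a :
  (forall s, D' s -> D (s - a)) -> continuous_on D f -> continuous_on D' (fun s => f (s - a)).
Proof.
  intros HD H t Dt e He. destruct (H (t - a) (HD t Dt) e He) as [d [Hd H']]. exists d. split; auto.
  intros s Ds Hs. apply H'; auto. replace (s - a - (t - a)) with (s - t) by ring. auto.
Qed.

Definition LP {X : NormedSpace} (f G : R -> X) (a b e d : R) : Prop :=
  forall s u t, a <= s -> s <= u -> u <= t -> t <= b -> t - s < d ->
    ns_norm (ns_sub (ns_sub (G t) (G s)) (ns_scal (t - s) (f u))) <= e * (t - s).

Lemma tel {X : NormedSpace} (f G : R -> X) (a b e d : R) n (p xi : nat -> R) :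
  LP f G a b e d -> (0 < n)%nat -> a <= p O -> p n <= b ->
  (forall i, (i < n)%nat -> p i <= xi i <= p (S i) /\ p (S i) - p i < d) ->
  ns_norm (ns_sub (vsum (fun i => ns_scal (p (S i) - p i) (f (xi i))) (pred n)) (ns_sub (G (p n)) (G (p O))))
    <= e * (p n - p O).
Proof.
  intros HLP Hn Ha Hb Hp.
  assert (Hmono : forall i j, (i <= j <= n)%nat -> p i <= p j).
  { intros i j Hij. induction j. assert (i = 0)%nat by lia. subst; lra.
    destruct (Nat.eq_dec i (S j)). subst; lra.
    apply Rle_trans with (p j). apply IHj; lia. destruct (Hp j ltac:(lia)); lra. }
  assert (Hgen : forall m, (m < n)%nat ->
    ns_norm (ns_sub (vsum (fun i => ns_scal (p (S i) - p i) (f (xi i))) m) (ns_sub (G (p (S m))) (G (p O))))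
    <= e * (p (S m) - p O)).
  { induction m; intros Hm.
    - simpl. destruct (Hp O Hm) as [[Hx1 Hx2] Hd].
      assert (p 1%nat <= p n) by (apply Hmono; lia).
      rewrite vnorm_sub_sym. apply HLP; lra.
    - specialize (IHm ltac:(lia)). simpl.
      destruct (Hp (S m) Hm) as [[Hx1 Hx2] Hd].
      assert (p O <= p (S m)) by (apply Hmono; lia).
      assert (p (S (S m)) <= p n) by (apply Hmono; lia).
      assert (Hdec : ns_sub (ns_add (vsum (fun i => ns_scal (p (S i) - p i) (f (xi i))) m)
                                  (ns_scal (p (S (S m)) - p (S m)) (f (xi (S m)))))
                            (ns_sub (G (p (S (S m)))) (G (p O))) =
         ns_sub (ns_sub (vsum (fun i => ns_scal (p (S i) - p i) (f (xi i))) m) (ns_sub (G (p (S m))) (G (p O))))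
                (ns_sub (ns_sub (G (p (S (S m)))) (G (p (S m)))) (ns_scal (p (S (S m)) - p (S m)) (f (xi (S m)))))) by vring.
      rewrite Hdec. eapply Rle_trans. apply vnorm_sub_le.
      replace (e * (p (S (S m)) - p O)) with (e * (p (S m) - p O) + e * (p (S (S m)) - p (S m))) by ring.
      apply Rplus_le_compat; auto. apply HLP; lra. }
  destruct n. lia. simpl. apply Hgen. lia.
Qed.

Lemma RInt_of_LP {X : NormedSpace} (f G : R -> X) (a b : R) :
  a < b -> (forall e, e > 0 -> exists d, d > 0 /\ LP f G a b e d) ->
  is_RInt f a b (ns_sub (G b) (G a)).
Proof.
  intros Hab H eps Heps. destruct (H (eps / (2 * (b - a))) ltac:(apply Rdiv_lt_0_compat; lra)) as [d [Hd HL]].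
  exists d. split; auto. intros n p xi Hp0 Hpn Hp.
  destruct n. rewrite Hp0 in Hpn. lra.
  rewrite <- Hpn, <- Hp0 at 1. eapply Rle_lt_trans. apply (tel f G a b _ d (S n) p xi HL); auto; try lia; try lra.
  rewrite Hpn, Hp0. replace (eps / (2 * (b - a)) * (b - a)) with (eps / 2) by (field; lra). lra.
Qed.

Lemma LP_of_deriv {X : NormedSpace} (f G : R -> X) (a b : R) :
  a <= b -> (forall t, a <= t <= b -> has_deriv_within (fun s => a <= s <= b) G t (f t)) ->
  continuous_on (fun s => a <= s <= b) f ->
  forall e, e > 0 -> exists d, d > 0 /\ LP f G a b e d.
Proof.
  intros Hab Hd Hc e He. destruct (heine f a b Hab Hc e He) as [d [Hd0 Hu]].
  exists d. split; auto. intros s u t Hs Hsu Hut Htb Hts.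
  apply (mvi (fun s => a <= s <= b) G f (f u) e s t).
  lra. intros r Hr; lra. intros r Hr. apply Hd; lra.
  intros r Hr. apply Hu; try lra. apply Rabs_def1; lra.
Qed.

Lemma RInt_of_deriv {X : NormedSpace} (f G : R -> X) (a b : R) :
  a < b -> (forall t, a <= t <= b -> has_deriv_within (fun s => a <= s <= b) G t (f t)) ->
  continuous_on (fun s => a <= s <= b) f ->
  is_RInt f a b (ns_sub (G b) (G a)).
Proof.
  intros Hab Hd Hc. apply RInt_of_LP; auto. apply LP_of_deriv; auto; lra.
Qed.

Ltac rnle := repeat match goal with H : ~ (_ <= _) |- _ => apply Rnot_le_lt in H end.

Ltac rcases := repeat match goal with |- context [Rle_dec ?x ?y] =>
   lazymatch x with context [Rle_dec _ _] => fail | _ => idtac end;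
   lazymatch y with context [Rle_dec _ _] => fail | _ => idtac end;
   destruct (Rle_dec x y) end; rnle.

Definition clip (a h : R) (i : nat) (t : R) : R := Rmin (Rmax (t - (a + INR i * h)) 0) h.

Definition stepprim {X : NormedSpace} (f : R -> X) (a h : R) (N : nat) (t : R) : X :=
  vsum (fun i => ns_scal (clip a h i t) (f (a + INR i * h))) N.

Lemma clip_sum (a h t : R) N : h > 0 ->
  sum_f_R0 (fun i => clip a h i t) N = Rmin (Rmax (t - a) 0) (INR (S N) * h).
Proof.
  intros Hh. induction N.
  - simpl. unfold clip. simpl. f_equal. f_equal. ring. ring.
  - simpl sum_f_R0. rewrite IHN. unfold clip.
    assert (0 <= INR N) by apply pos_INR.
    replace (t - (a + INR (S N) * h)) with ((t - a) - INR (S N) * h) by ring.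
    replace (INR (S (S N)) * h) with (INR (S N) * h + h) by (rewrite (S_INR (S N)); ring).
    assert (HH : INR (S N) * h > 0) by (apply Rmult_lt_0_compat; auto; apply lt_0_INR; lia).
    generalize (INR (S N) * h) HH. generalize (t - a). intros x HX HH'.
    unfold Rmin, Rmax.
    rcases; lra.
Qed.

Lemma vsum_scal_const {X : NormedSpace} (al : nat -> R) (c : X) k :
  vsum (fun i => ns_scal (al i) c) k = ns_scal (sum_f_R0 al k) c.
Proof. induction k; simpl. reflexivity. rewrite IHk, ns_scal_distr_r. reflexivity. Qed.

Lemma clip_mono a h i s t : h > 0 -> s <= t -> clip a h i s <= clip a h i t.
Proof.
  intros. unfold clip, Rmin, Rmax.
  rcases; lra.
Qed.

Lemma clip_supp a h i s t : h > 0 -> s <= t -> clip a h i s < clip a h i t ->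
  a + INR i * h < t /\ s < a + INR i * h + h.
Proof.
  intros Hh Hst. unfold clip, Rmin, Rmax.
  rcases; lra.
Qed.

Lemma clip_a a h i : h > 0 -> clip a h i a = 0.
Proof.
  intros Hh. assert (0 <= INR i) by apply pos_INR. unfold clip, Rmin, Rmax.
  rcases; nra.
Qed.

Lemma stepprim_a {X : NormedSpace} (f : R -> X) a h N : h > 0 -> stepprim f a h N a = ns_zero.
Proof.
  intros Hh. unfold stepprim. apply vsum_zero. intros i _. rewrite clip_a by auto. apply vscal0.
Qed.

Lemma stepprim_LP {X : NormedSpace} (f : R -> X) (a b e du : R) N :
  a < b -> (forall u v, a <= u <= b -> a <= v <= b -> Rabs (u - v) < du -> ns_norm (ns_sub (f u) (f v)) <= e) ->
  (b - a) / INR (S N) < du / 2 -> e >= 0 ->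
  LP f (stepprim f a ((b - a) / INR (S N)) N) a b e (du / 2).
Proof.
  intros Hab Hu Hh He s u t Hs Hsu Hut Htb Hts.
  set (h := (b - a) / INR (S N)) in *.
  assert (HSN : INR (S N) > 0) by (apply lt_0_INR; lia).
  assert (Hhp : h > 0) by (unfold h; apply Rdiv_lt_0_compat; lra).
  assert (HNh : INR (S N) * h = b - a) by (unfold h; field; lra).
  assert (Hsum : sum_f_R0 (fun i => clip a h i t - clip a h i s) N = t - s).
  { rewrite minus_sum, !clip_sum by auto. rewrite HNh. unfold Rmin, Rmax.
    rcases; lra. }
  assert (Hdec : ns_sub (ns_sub (stepprim f a h N t) (stepprim f a h N s)) (ns_scal (t - s) (f u)) =
    vsum (fun i => ns_scal (clip a h i t - clip a h i s) (ns_sub (f (a + INR i * h)) (f u))) N).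
  { rewrite <- Hsum, <- vsum_scal_const. unfold stepprim. rewrite <- !vsum_sub.
    apply vsum_ext. intros i _. vring. }
  rewrite Hdec. eapply Rle_trans. apply vsum_norm.
  rewrite <- Hsum, scal_sum. apply sum_Rle. intros i Hi. rewrite ns_norm_scal.
  assert (Hm := clip_mono a h i s t Hhp ltac:(lra)).
  destruct (Rle_lt_or_eq_dec _ _ Hm) as [Hlt|Heq].
  - rewrite Rabs_right by lra. apply Rmult_le_compat_l. lra.
    destruct (clip_supp a h i s t Hhp ltac:(lra) Hlt) as [H1 H2].
    assert (Hi' : INR i <= INR N) by (apply le_INR; lia).
    rewrite S_INR in HNh. assert (0 <= INR i) by apply pos_INR.
    apply Hu; try split; try nra. apply Rabs_def1; nra.
  - rewrite Heq, Rminus_diag_eq, Rabs_R0 by auto. lra.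
Qed.

Lemma partition_exists (a t d : R) : a < t -> d > 0 ->
  exists n (p xi : nat -> R), (0 < n)%nat /\ p O = a /\ p n = t /\
    forall i, (i < n)%nat -> p i <= xi i <= p (S i) /\ p (S i) - p i < d.
Proof.
  intros Hat Hd. destruct (INR_unbounded ((t - a) / d)) as [K HK].
  assert (HK0 : INR K > 0). { assert ((t - a) / d > 0) by (apply Rdiv_lt_0_compat; lra). lra. }
  assert (HKn : (0 < K)%nat) by (apply INR_lt; simpl; lra).
  exists K, (fun i => a + INR i * ((t - a) / INR K)), (fun i => a + INR i * ((t - a) / INR K)).
  split; auto. split. simpl. ring. split. field. lra.
  intros i Hi. rewrite S_INR. split. split; try lra.
  assert ((t - a) / INR K > 0) by (apply Rdiv_lt_0_compat; lra). nra.
  replace (a + (INR i + 1) * ((t - a) / INR K) - (a + INR i * ((t - a) / INR K))) with ((t - a) / INR K) by ring.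
  apply (Rmult_lt_reg_r (INR K)). lra. unfold Rdiv. rewrite Rmult_assoc, Rinv_l by lra.
  apply (Rmult_lt_reg_r (/ d)). apply Rinv_0_lt_compat; lra.
  rewrite Rmult_1_r. replace (d * INR K * / d) with (INR K) by (field; lra). lra.
Qed.

Definition seqF {X : NormedSpace} (f : R -> X) (a b t : R) (n : nat) : X :=
  stepprim f a ((b - a) / INR (S n)) n t.

Lemma seqF_LP {X : NormedSpace} (f : R -> X) (a b : R) :
  a < b -> continuous_on (fun s => a <= s <= b) f ->
  forall e, e > 0 -> exists d, d > 0 /\ exists N, forall n, (n >= N)%nat ->
     LP f (fun t => seqF f a b t n) a b e d.
Proof.
  intros Hab Hc e He. destruct (heine f a b ltac:(lra) Hc e He) as [du [Hdu Hu]].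
  exists (du / 2). split. lra.
  destruct (INR_unbounded ((b - a) / (du / 2))) as [N HN].
  exists N. intros n Hn. unfold seqF. apply stepprim_LP; auto; try lra.
  assert (HnN : INR N <= INR n) by (apply le_INR; lia).
  rewrite S_INR.
  assert (Hx : (b - a) / (du / 2) > 0) by (apply Rdiv_lt_0_compat; lra).
  apply (Rmult_lt_reg_r (INR n + 1)). lra.
  replace ((b - a) / (INR n + 1) * (INR n + 1)) with (b - a) by (field; lra).
  replace (b - a) with ((b - a) / (du / 2) * (du / 2)) by (field; lra).
  rewrite (Rmult_comm (du/2)). apply Rmult_lt_compat_r; lra.
Qed.

Lemma seqF_a {X : NormedSpace} (f : R -> X) (a b : R) n : a < b -> seqF f a b a n = ns_zero.
Proof.
  intros Hab. unfold seqF. apply stepprim_a. apply Rdiv_lt_0_compat. lra. apply lt_0_INR; lia.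
Qed.

Lemma seqF_cauchy {X : NormedSpace} (f : R -> X) (a b t : R) :
  a < b -> continuous_on (fun s => a <= s <= b) f -> a <= t <= b ->
  forall eps, eps > 0 -> exists N, forall m n, (m >= N)%nat -> (n >= N)%nat ->
    ns_norm (ns_sub (seqF f a b t m) (seqF f a b t n)) < eps.
Proof.
  intros Hab Hc Ht eps Heps.
  destruct (seqF_LP f a b Hab Hc (eps / (4 * (b - a))) ltac:(apply Rdiv_lt_0_compat; lra)) as [d [Hd [N HN]]].
  exists N. intros m n Hm Hn.
  destruct (Req_dec t a) as [->|Hta].
  { rewrite !seqF_a, vsub_self, vnorm0 by auto. lra. }
  destruct (partition_exists a t d ltac:(lra) Hd) as [k [p [xi [Hk [Hp0 [Hpk Hp]]]]]].
  assert (T1 := tel f (fun t => seqF f a b t m) a b _ d k p xi (HN m Hm) Hk ltac:(lra) ltac:(lra) Hp).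
  assert (T2 := tel f (fun t => seqF f a b t n) a b _ d k p xi (HN n Hn) Hk ltac:(lra) ltac:(lra) Hp).
  simpl in T1, T2. rewrite Hpk, Hp0, seqF_a in T1, T2 by auto. rewrite vsub0 in T1, T2.
  set (RS := vsum (fun i => ns_scal (p (S i) - p i) (f (xi i))) (Init.Nat.pred k)) in *.
  assert (Hdec : ns_sub (seqF f a b t m) (seqF f a b t n) = ns_sub (ns_sub RS (seqF f a b t n)) (ns_sub RS (seqF f a b t m))) by vring.
  rewrite Hdec. eapply Rle_lt_trans. apply vnorm_sub_le.
  assert (eps / (4 * (b - a)) * (t - a) <= eps / 4).
  { replace (eps / 4) with (eps / (4 * (b - a)) * (b - a)) by (field; lra).
    apply Rmult_le_compat_l. apply Rlt_le, Rdiv_lt_0_compat; lra. lra. }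
  lra.
Qed.

Lemma prim_exists {X : NormedSpace} (HX : complete X) (f : R -> X) (a b : R) :
  a < b -> continuous_on (fun s => a <= s <= b) f ->
  exists F : R -> X, F a = ns_zero /\ forall t, a <= t <= b -> has_deriv_within (fun s => a <= s <= b) F t (f t).
Proof.
  intros Hab Hc.
  set (islim := fun t l => forall e, e > 0 -> exists N, forall n, (n >= N)%nat -> ns_norm (ns_sub (seqF f a b t n) l) < e).
  assert (Hex : forall t, a <= t <= b -> exists l, islim t l).
  { intros t Ht. apply HX. intros e He. apply (seqF_cauchy f a b t Hab Hc Ht e He). }
  set (F := fun t => epsilon (inhabits ns_zero) (islim t)).
  assert (HF : forall t, a <= t <= b -> islim t (F t)).
  { intros t Ht. unfold F. apply epsilon_spec. apply Hex; auto. }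
  exists F. split.
  - apply vnorm_small0. intros e He. destruct (HF a ltac:(lra) e He) as [N HN].
    specialize (HN N (le_n N)). rewrite seqF_a, vsub_0l, vnorm_opp in HN by auto. lra.
  - assert (HLP : forall e, e > 0 -> exists d, d > 0 /\ LP f F a b e d).
    { intros e He. destruct (seqF_LP f a b Hab Hc e He) as [d [Hd [N HN]]]. exists d. split; auto.
      intros s u t Hs Hsu Hut Htb Hts. apply le_eps. intros eta Heta.
      destruct (HF t ltac:(lra) (eta/2) ltac:(lra)) as [N1 HN1].
      destruct (HF s ltac:(lra) (eta/2) ltac:(lra)) as [N2 HN2].
      set (n := (N + N1 + N2)%nat).
      specialize (HN n ltac:(unfold n; lia) s u t Hs Hsu Hut Htb Hts).
      specialize (HN1 n ltac:(unfold n; lia)). specialize (HN2 n ltac:(unfold n; lia)).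
      simpl in HN.
      assert (Hdec : ns_sub (ns_sub (F t) (F s)) (ns_scal (t - s) (f u)) =
        ns_add (ns_sub (ns_sub (seqF f a b t n) (seqF f a b s n)) (ns_scal (t - s) (f u)))
               (ns_sub (ns_sub (seqF f a b s n) (F s)) (ns_sub (seqF f a b t n) (F t)))) by vring.
      rewrite Hdec. eapply Rle_trans. apply ns_norm_triangle.
      eapply Rle_trans. apply Rplus_le_compat_l. apply vnorm_sub_le. lra. }
    intros t Ht e He. destruct (HLP e He) as [d [Hd HL]]. exists d. split; auto.
    intros h Hh Hhd Dh. destruct (Rlt_or_le 0 h) as [Hpos|Hneg].
    + rewrite Rabs_right by lra. replace h with (t + h - t) at 2 by ring.
      replace h with (t + h - t) at 3 by ring.
      apply HL; try lra. rewrite Rabs_right in Hhd; lra.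
    + assert (h < 0) by (destruct (Req_dec h 0); [contradiction|lra]).
      rewrite Rabs_left by lra. rewrite vneg_diff, vnorm_opp.
      replace (- h) with (t - (t + h)) by ring. apply HL; try lra. rewrite Rabs_left in Hhd; lra.
Qed.

Lemma deriv_dom_loc {X : NormedSpace} (D D' : R -> Prop) (f : R -> X) t v eta :
  eta > 0 -> (forall s, D' s -> Rabs (s - t) < eta -> D s) ->
  has_deriv_within D f t v -> has_deriv_within D' f t v.
Proof.
  intros Heta HD H e He. destruct (H e He) as [d [Hd H']]. exists (Rmin d eta). split. apply Rmin_glb_lt; lra.
  intros h Hh Hhd Dh. assert (Hm1 := Rmin_l d eta). assert (Hm2 := Rmin_r d eta).
  apply H'; auto. lra. apply HD; auto. replace (t + h - t) with h by ring. lra.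
Qed.

Lemma cont_loc {X : NormedSpace} (D : R -> Prop) (f : R -> X) :
  (forall t, D t -> exists g eta, eta > 0 /\ (forall s, D s -> Rabs (s - t) < eta -> f s = g s) /\ continuous_on D g) ->
  continuous_on D f.
Proof.
  intros H t Dt e He. destruct (H t Dt) as [g [eta [Heta [Heq Hg]]]].
  destruct (Hg t Dt e He) as [d [Hd Hd']]. exists (Rmin d eta). split. apply Rmin_glb_lt; lra.
  intros s Ds Hs. assert (Hm1 := Rmin_l d eta). assert (Hm2 := Rmin_r d eta).
  rewrite (Heq s Ds ltac:(lra)), (Heq t Dt ltac:(rewrite Rminus_diag_eq, Rabs_R0; lra)).
  apply Hd'; auto; lra.
Qed.

Definition prim_of {X : NormedSpace} (a : R) (f : R -> X) : R -> X :=
  epsilon (inhabits (fun _ : R => @ns_zero X))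
    (fun F => F a = ns_zero /\ forall t, a <= t <= 0 -> has_deriv_within (fun s => a <= s <= 0) F t (f t)).

Fixpoint Phi {X : NormedSpace} (a : R) (ph ph1 ph2 : R -> X) (n : nat) : R -> X :=
  match n with
  | O => ph2
  | S O => ph1
  | S (S O) => ph
  | S ((S (S _)) as m) => prim_of a (Phi a ph ph1 ph2 m)
  end.

Lemma Phi_props {X : NormedSpace} (HX : complete X) (a : R) (ph ph1 ph2 : R -> X) :
  a < 0 -> is_C2_on (fun s => a <= s <= 0) ph ph1 ph2 ->
  forall n, continuous_on (fun s => a <= s <= 0) (Phi a ph ph1 ph2 n) /\
    (forall t, a <= t <= 0 -> has_deriv_within (fun s => a <= s <= 0) (Phi a ph ph1 ph2 (S n)) t (Phi a ph ph1 ph2 n t)) /\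
    ((3 <= S n)%nat -> Phi a ph ph1 ph2 (S n) a = ns_zero).
Proof.
  intros Ha [[Hd0 Hc0] [Hd1 Hc1]].
  induction n as [|n IH].
  - split. exact Hc1. split. exact Hd1. lia.
  - destruct IH as [Hc [Hd Hz]].
    split. apply (cont_of_deriv _ _ (Phi a ph ph1 ph2 n)). exact Hd.
    destruct n as [|n].
    + split. exact Hd0. lia.
    + assert (Hex : exists F : R -> X, F a = ns_zero /\ forall t, a <= t <= 0 ->
          has_deriv_within (fun s => a <= s <= 0) F t (Phi a ph ph1 ph2 (S (S n)) t)).
      { apply prim_exists; auto. apply (cont_of_deriv _ _ (Phi a ph ph1 ph2 (S n))). exact Hd. }
      assert (Hsp := epsilon_spec (inhabits (fun _ : R => @ns_zero X)) _ Hex).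
      change (Phi a ph ph1 ph2 (S (S (S n)))) with (prim_of a (Phi a ph ph1 ph2 (S (S n)))).
      unfold prim_of. split. apply Hsp. intros _. apply Hsp.
Qed.

Definition dmon (k : nat) (v : R) : R :=
  match k with O => 0 | S k' => v ^ k' / INR (fact k') end.

Lemma dmon_deriv (k : nat) (v : R) : derivable_pt_lim (fun y => y ^ k / INR (fact k)) v (dmon k v).
Proof.
  assert (Hf : INR (fact k) <> 0) by (apply not_0_INR; apply fact_neq_0).
  assert (H := derivable_pt_lim_pow v k).
  assert (H2 := derivable_pt_lim_scal (fun y => y ^ k) (/ INR (fact k)) v _ H).
  unfold mult_real_fct in H2.
  replace (dmon k v) with (/ INR (fact k) * (INR k * v ^ Init.Nat.pred k)).
  - intros e He. destruct (H2 e He) as [d Hd]. exists d. intros h Hh Hhd.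
    specialize (Hd h Hh Hhd). unfold Rdiv. rewrite (Rmult_comm (v ^ k)), (Rmult_comm ((v + h) ^ k)). exact Hd.
  - destruct k. simpl. ring. simpl pred. unfold dmon. rewrite fact_simpl, mult_INR.
    assert (INR (fact k) <> 0) by (apply not_0_INR; apply fact_neq_0).
    assert (INR (S k) <> 0) by (apply not_0_INR; lia). field. auto.
Qed.

Definition Ppol {X : NormedSpace} (a : R) (ph ph1 ph2 : R -> X) (n : nat) (v : R) : X :=
  vsum (fun k => ns_scal (v ^ k / INR (fact k)) (Phi a ph ph1 ph2 (S n - k) 0)) n.

Lemma Ppol_deriv_gen {X : NormedSpace} (D : R -> Prop) (a : R) (ph ph1 ph2 : R -> X) n v :
  has_deriv_within D (Ppol a ph ph1 ph2 n) v
    (vsum (fun k => ns_scal (dmon k v) (Phi a ph ph1 ph2 (S n - k) 0)) n).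
Proof.
  unfold Ppol. apply (deriv_vsum D (fun k v => ns_scal (v ^ k / INR (fact k)) (Phi a ph ph1 ph2 (S n - k) 0))
     (fun k v => ns_scal (dmon k v) (Phi a ph ph1 ph2 (S n - k) 0))).
  intros i _. apply deriv_cscal. apply dmon_deriv.
Qed.

Lemma Ppol_deriv {X : NormedSpace} (D : R -> Prop) (a : R) (ph ph1 ph2 : R -> X) n v :
  has_deriv_within D (Ppol a ph ph1 ph2 (S n)) v (Ppol a ph ph1 ph2 n v).
Proof.
  eapply deriv_ext_v; [|apply Ppol_deriv_gen].
  rewrite vsum_shift. simpl dmon. rewrite vscal0, vadd0l. unfold Ppol. apply vsum_ext.
  intros i _. reflexivity.
Qed.

Lemma Ppol_cont {X : NormedSpace} (D : R -> Prop) (a : R) (ph ph1 ph2 : R -> X) n :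
  continuous_on D (Ppol a ph ph1 ph2 n).
Proof. eapply cont_of_deriv. intros t _. apply Ppol_deriv_gen. Qed.

Lemma Ppol_0 {X : NormedSpace} (a : R) (ph ph1 ph2 : R -> X) n :
  Ppol a ph ph1 ph2 n 0 = Phi a ph ph1 ph2 (S n) 0.
Proof.
  unfold Ppol. destruct n.
  - simpl. replace (1 / 1) with 1 by field. apply ns_scal_one.
  - rewrite vsum_shift. rewrite vsum_zero.
    + simpl. replace (1 / 1) with 1 by field. rewrite ns_scal_one. apply ns_add_zero.
    + intros i _. simpl. rewrite Rmult_0_l. unfold Rdiv. rewrite Rmult_0_l. apply vscal0.
Qed.

Definition E {X : NormedSpace} (a : R) (ph ph1 ph2 : R -> X) (n : nat) (v : R) : X :=
  if Rlt_dec v a then ns_zero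
  else if Rle_dec v 0 then Phi a ph ph1 ph2 (S n) v
  else Ppol a ph ph1 ph2 n v.

Lemma E_lt {X : NormedSpace} a (ph ph1 ph2 : R -> X) n v : v < a -> E a ph ph1 ph2 n v = ns_zero.
Proof. intros H. unfold E. destruct (Rlt_dec v a); [reflexivity|lra]. Qed.

Lemma E_mid {X : NormedSpace} a (ph ph1 ph2 : R -> X) n v : a <= v <= 0 -> E a ph ph1 ph2 n v = Phi a ph ph1 ph2 (S n) v.
Proof. intros H. unfold E. destruct (Rlt_dec v a); [lra|]. destruct (Rle_dec v 0); [reflexivity|lra]. Qed.

Lemma E_pos {X : NormedSpace} a (ph ph1 ph2 : R -> X) n v : a < 0 -> 0 <= v -> E a ph ph1 ph2 n v = Ppol a ph ph1 ph2 n v.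
Proof.
  intros Ha H. unfold E. destruct (Rlt_dec v a); [lra|]. destruct (Rle_dec v 0).
  - assert (v = 0) by lra. subst. symmetry. apply Ppol_0.
  - reflexivity.
Qed.

Lemma E_deriv {X : NormedSpace} (HX : complete X) (a : R) (ph ph1 ph2 : R -> X) :
  a < 0 -> is_C2_on (fun s => a <= s <= 0) ph ph1 ph2 ->
  forall n v, a <= v -> has_deriv_within (fun s => a <= s) (E a ph ph1 ph2 (S n)) v (E a ph ph1 ph2 n v).
Proof.
  intros Ha Hphi n v Hv.
  destruct (Phi_props HX a ph ph1 ph2 Ha Hphi (S n)) as [_ [Hd _]].
  destruct (Rlt_le_dec v 0) as [Hv0|Hv0]; [|destruct (Rle_lt_or_eq_dec _ _ Hv0) as [Hv1|Hv1]].
  - rewrite E_mid by lra. apply (deriv_ext_loc _ (Phi a ph ph1 ph2 (S (S n))) _ _ _ (-v));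
      [lra | intros s Hs Hsv; apply Rabs_def2 in Hsv; rewrite E_mid; [reflexivity|lra] | simpl; lra | ].
    apply (deriv_dom_loc (fun s => a <= s <= 0) _ _ _ _ (-v));
      [lra | intros s Hs Hsv; apply Rabs_def2 in Hsv; simpl in Hs; lra | apply Hd; lra].
  - rewrite E_pos by lra. apply (deriv_ext_loc _ (Ppol a ph ph1 ph2 (S n)) _ _ _ v);
      [lra | intros s Hs Hsv; apply Rabs_def2 in Hsv; rewrite E_pos; [reflexivity|lra|lra] | simpl; lra | ].
    apply Ppol_deriv.
  - subst v. apply deriv_glue.
    + rewrite E_mid by lra. apply (deriv_ext _ (Phi a ph ph1 ph2 (S (S n)))).
      intros s [Hs1 Hs2]. rewrite E_mid; auto. simpl; lra.
      apply (deriv_mono (fun s => a <= s <= 0)). intros s [H1 H2]; lra. apply Hd; lra.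
    + rewrite E_pos, Ppol_0 by lra. rewrite <- Ppol_0.
      apply (deriv_ext _ (Ppol a ph ph1 ph2 (S n))).
      intros s [Hs1 Hs2]. rewrite E_pos; auto. simpl; lra. apply Ppol_deriv.
Qed.

Lemma E_deriv_all {X : NormedSpace} (HX : complete X) (a : R) (ph ph1 ph2 : R -> X) :
  a < 0 -> is_C2_on (fun s => a <= s <= 0) ph ph1 ph2 ->
  forall n v, (2 <= n)%nat -> has_deriv_within (fun _ => True) (E a ph ph1 ph2 (S n)) v (E a ph ph1 ph2 n v).
Proof.
  intros Ha Hphi n v Hn.
  destruct (Phi_props HX a ph ph1 ph2 Ha Hphi (S n)) as [_ [_ Hz1]].
  destruct (Phi_props HX a ph ph1 ph2 Ha Hphi n) as [_ [_ Hz2]].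
  destruct (Rlt_le_dec v a) as [Hv|Hv]; [|destruct (Rle_lt_or_eq_dec _ _ Hv) as [Hv1|Hv1]].
  - rewrite E_lt by auto. apply (deriv_ext_loc _ (fun _ => ns_zero) _ _ _ (a - v)). lra.
    intros s _ Hs. apply Rabs_def2 in Hs. rewrite E_lt; auto; lra. auto. apply deriv_const.
  - apply (deriv_dom_loc (fun s => a <= s) _ _ _ _ (v - a)). lra.
    intros s _ Hs. apply Rabs_def2 in Hs. lra. apply E_deriv; auto; lra.
  - subst v. apply deriv_glue.
    + rewrite E_mid, Hz2 by (lra || lia). apply (deriv_ext _ (fun _ => ns_zero)).
      intros s [_ Hs]. destruct (Rle_lt_or_eq_dec _ _ Hs). rewrite E_lt; auto. subst. rewrite E_mid, Hz1; auto; lia || lra.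
      split; auto; lra. apply deriv_const.
    + apply (deriv_mono (fun s => a <= s)). intros s [_ H]; auto. apply E_deriv; auto; lra.
Qed.

Lemma E_cont_ge {X : NormedSpace} (HX : complete X) (a : R) (ph ph1 ph2 : R -> X) :
  a < 0 -> is_C2_on (fun s => a <= s <= 0) ph ph1 ph2 ->
  forall n, continuous_on (fun s => a <= s) (E a ph ph1 ph2 n).
Proof.
  intros Ha Hphi n. destruct (Phi_props HX a ph ph1 ph2 Ha Hphi (S n)) as [Hc _].
  apply (cont_glue _ _ 0).
  - apply (cont_ext _ (Phi a ph ph1 ph2 (S n))). intros s [H1 H2]. rewrite E_mid; auto.
    apply (cont_mono (fun s => a <= s <= 0)); [intros s [H1 H2]; lra | exact Hc].
  - apply (cont_ext _ (Ppol a ph ph1 ph2 n)). intros s [H1 H2]. rewrite E_pos; auto. apply Ppol_cont.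
Qed.

Lemma E_cont_all {X : NormedSpace} (HX : complete X) (a : R) (ph ph1 ph2 : R -> X) :
  a < 0 -> is_C2_on (fun s => a <= s <= 0) ph ph1 ph2 ->
  forall n, (2 <= n)%nat -> continuous_on (fun _ => True) (E a ph ph1 ph2 n).
Proof.
  intros Ha Hphi n Hn. destruct (Phi_props HX a ph ph1 ph2 Ha Hphi n) as [_ [_ Hz]].
  apply (cont_glue _ _ a).
  - apply (cont_ext _ (fun _ => ns_zero)). intros s [_ Hs]. destruct (Rle_lt_or_eq_dec _ _ Hs).
    rewrite E_lt; auto. subst. rewrite E_mid, Hz; auto; lia || lra. apply cont_const.
  - apply (cont_mono (fun s => a <= s)). intros s [_ H]; auto. apply E_cont_ge; auto.
Qed.

Lemma INR_toNat (z : Z) : (0 <= z)%Z -> INR (Z.to_nat z) = IZR z.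
Proof. intros H. rewrite INR_IZR_INZ, Z2Nat.id; auto. Qed.
Lemma up_pos (x : R) : 0 <= x -> (0 <= up x)%Z.
Proof. intros H. destruct (archimed x) as [H1 _]. apply le_IZR. lra. Qed.

Definition bnd (tau t : R) : nat := (Z.to_nat (up (Rabs t / tau)) + 6)%nat.

Lemma bnd_ge (tau t : R) : tau > 0 -> INR (bnd tau t) >= Rabs t / tau + 6.
Proof.
  intros Ht. unfold bnd. rewrite plus_INR. assert (H0 : 0 <= Rabs t / tau).
  { apply Rmult_le_pos. apply Rabs_pos. apply Rlt_le, Rinv_0_lt_compat; auto. }
  rewrite INR_toNat by (apply up_pos; auto). destruct (archimed (Rabs t / tau)) as [H1 _].
  simpl. lra.
Qed.

Definition Sx {X : NormedSpace} (O : X -> X) (tau : R) (ph ph1 ph2 : R -> X) (k N : nat) (t : R) : X :=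
  vsum (fun m => opow O (2 * m) (E (- (2 * tau)) ph ph1 ph2 (k + 2 * m) (t - 2 * INR m * tau))) N.

Lemma Sx_ext1 {X : NormedSpace} (O : X -> X) (tau : R) (ph ph1 ph2 : R -> X) k K N t :
  in_LX O -> tau > 0 -> (k <= 1)%nat -> (K <= N)%nat -> INR K >= Rabs t / tau + 2 ->
  Sx O tau ph ph1 ph2 k N t = Sx O tau ph ph1 ph2 k K t.
Proof.
  intros HO Ht Hk HKN HK. unfold Sx. apply vsum_extend; auto.
  intros i Hi _. rewrite E_lt. apply lin_zero. apply opow_LX; auto.
  assert (INR i >= INR K + 1) by (rewrite <- S_INR; apply Rle_ge, le_INR; lia).
  assert (Hr : Rabs t / tau * tau = Rabs t) by (field; lra).
  assert (t <= Rabs t) by apply RRle_abs. assert (Hp := Rabs_pos t).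
  set (r := Rabs t / tau) in *.
  assert (0 <= INR i - (r + 3)) by lra.
  assert (0 <= (INR i - (r + 3)) * tau) by (apply Rmult_le_pos; lra).
  assert (INR i * tau >= Rabs t + 3 * tau) by (rewrite <- Hr; nra).
  lra.
Qed.

Lemma Sx_eq {X : NormedSpace} (O : X -> X) (tau : R) (ph ph1 ph2 : R -> X) k K N t :
  in_LX O -> tau > 0 -> (k <= 1)%nat -> INR K >= Rabs t / tau + 2 -> INR N >= Rabs t / tau + 2 ->
  Sx O tau ph ph1 ph2 k N t = Sx O tau ph ph1 ph2 k K t.
Proof.
  intros HO Ht Hk HK HN. destruct (Nat.le_ge_cases K N).
  apply Sx_ext1; auto. symmetry. apply Sx_ext1; auto.
Qed.

Definition xsol {X : NormedSpace} (O : X -> X) (tau : R) (ph ph1 ph2 : R -> X) (t : R) : X :=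
  Sx O tau ph ph1 ph2 1 (bnd tau t) t.
Definition xdsol {X : NormedSpace} (O : X -> X) (tau : R) (ph ph1 ph2 : R -> X) (t : R) : X :=
  Sx O tau ph ph1 ph2 0 (bnd tau t) t.

Lemma xsol_eq {X : NormedSpace} (O : X -> X) (tau : R) (ph ph1 ph2 : R -> X) N t :
  in_LX O -> tau > 0 -> INR N >= Rabs t / tau + 2 -> xsol O tau ph ph1 ph2 t = Sx O tau ph ph1 ph2 1 N t.
Proof. intros HO Ht HN. unfold xsol. symmetry. apply Sx_eq; auto. assert (H := bnd_ge tau t Ht). lra. Qed.

Lemma xdsol_eq {X : NormedSpace} (O : X -> X) (tau : R) (ph ph1 ph2 : R -> X) N t :
  in_LX O -> tau > 0 -> INR N >= Rabs t / tau + 2 -> xdsol O tau ph ph1 ph2 t = Sx O tau ph ph1 ph2 0 N t.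
Proof. intros HO Ht HN. unfold xdsol. symmetry. apply Sx_eq; auto. assert (H := bnd_ge tau t Ht). lra. Qed.

Lemma loc_bound (tau t s : R) : tau > 0 -> Rabs (s - t) < 1 ->
  INR (bnd tau (Rabs t + 1)) >= Rabs s / tau + 6.
Proof.
  intros Ht Hs. assert (H := bnd_ge tau (Rabs t + 1) Ht).
  rewrite (Rabs_right (Rabs t + 1)) in H by (assert (H0 := Rabs_pos t); lra).
  assert (Rabs s <= Rabs t + 1).
  { replace s with ((s - t) + t) by ring. eapply Rle_trans. apply Rabs_triang. lra. }
  assert (Rabs s / tau <= (Rabs t + 1) / tau). { apply Rmult_le_compat_r. apply Rlt_le, Rinv_0_lt_compat; auto. auto. }
  lra.
Qed.

Lemma Sx1_deriv {X : NormedSpace} (HX : complete X) (O : X -> X) (tau : R) (ph ph1 ph2 : R -> X) N t :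
  in_LX O -> tau > 0 -> is_C2_on (fun s => - (2 * tau) <= s <= 0) ph ph1 ph2 -> - (2 * tau) <= t ->
  has_deriv_within (fun s => - (2 * tau) <= s) (Sx O tau ph ph1 ph2 1 N) t (Sx O tau ph ph1 ph2 0 N t).
Proof.
  intros HO Ht Hphi Hta. unfold Sx.
  apply (deriv_vsum _ (fun m s => opow O (2 * m) (E (- (2 * tau)) ph ph1 ph2 (1 + 2 * m) (s - 2 * INR m * tau)))
           (fun m s => opow O (2 * m) (E (- (2 * tau)) ph ph1 ph2 (0 + 2 * m) (s - 2 * INR m * tau)))).
  intros m _. apply deriv_lin. apply opow_LX; auto.
  destruct m as [|m].
  - apply (deriv_shift (fun s => - (2 * tau) <= s)). intros s Hs. simpl. lra.
    apply E_deriv; auto. lra. simpl. lra.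
  - apply (deriv_shift (fun _ => True)). auto.
    apply (deriv_mono (fun _ => True)). auto.
    replace (1 + 2 * S m)%nat with (S (0 + 2 * S m)) by lia.
    apply E_deriv_all; auto. lra. lia.
Qed.

Lemma E0_const {X : NormedSpace} (a : R) (ph ph1 ph2 : R -> X) v : a < 0 -> 0 <= v ->
  E a ph ph1 ph2 0 v = Phi a ph ph1 ph2 1 0.
Proof.
  intros Ha Hv. rewrite E_pos by auto. unfold Ppol. simpl. replace (1 / 1) with 1 by field. apply ns_scal_one.
Qed.

Definition dSx {X : NormedSpace} (O : X -> X) (tau : R) (ph ph1 ph2 : R -> X) (i : nat) (t : R) : X :=
  match i with
  | Datatypes.O => ns_zero
  | S m => opow O (2 * S m) (E (- (2 * tau)) ph ph1 ph2 (1 + 2 * m) (t - 2 * INR (S m) * tau))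
  end.

Lemma Sx0_deriv {X : NormedSpace} (HX : complete X) (O : X -> X) (tau : R) (ph ph1 ph2 : R -> X) N t :
  in_LX O -> tau > 0 -> is_C2_on (fun s => - (2 * tau) <= s <= 0) ph ph1 ph2 -> 0 <= t ->
  has_deriv_within (fun s => 0 <= s) (Sx O tau ph ph1 ph2 0 N) t (vsum (fun i => dSx O tau ph ph1 ph2 i t) N).
Proof.
  intros HO Ht Hphi Ht0. unfold Sx.
  apply (deriv_vsum _ (fun m s => opow O (2 * m) (E (- (2 * tau)) ph ph1 ph2 (0 + 2 * m) (s - 2 * INR m * tau)))
           (fun i t => dSx O tau ph ph1 ph2 i t)).
  intros m _. destruct m as [|m].
  - simpl. apply (deriv_ext _ (fun _ => Phi (- (2 * tau)) ph ph1 ph2 1 0)).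
    intros s Hs. rewrite E0_const; auto. lra. lra. auto. apply deriv_const.
  - unfold dSx. apply (deriv_lin _ (opow O (2 * S m))). apply opow_LX; auto.
    replace (0 + 2 * S m)%nat with (S (1 + 2 * m)) by lia.
    destruct m as [|m].
    + apply (deriv_shift (fun s => - (2 * tau) <= s)). intros s Hs. simpl. lra.
      apply E_deriv; auto. lra. simpl. lra.
    + apply (deriv_shift (fun _ => True)). auto.
      apply (deriv_mono (fun _ => True)). auto.
      apply E_deriv_all; auto. lra. lia.
Qed.


Lemma vsum_S {X : NormedSpace} (f : nat -> X) k : vsum f (S k) = ns_add (vsum f k) (f (S k)).
Proof. reflexivity. Qed.

Lemma Sx_term_zero {X : NormedSpace} (HX : complete X) (O : X -> X) (tau : R) (ph ph1 ph2 : R -> X) k m t :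
  in_LX O -> tau > 0 -> is_C2_on (fun s => - (2 * tau) <= s <= 0) ph ph1 ph2 ->
  t <= 0 -> (1 <= m)%nat ->
  opow O (2 * m) (E (- (2 * tau)) ph ph1 ph2 (k + 2 * m) (t - 2 * INR m * tau)) = ns_zero.
Proof.
  intros HO Ht Hphi Ht0 Hm.
  assert (HmR : INR m >= 1) by (apply Rle_ge; replace 1 with (INR 1) by reflexivity; apply le_INR; lia).
  rewrite <- (lin_zero (opow O (2 * m))) by (apply opow_LX; auto). f_equal.
  destruct (Rlt_or_le (t - 2 * INR m * tau) (- (2 * tau))).
  - apply E_lt; auto.
  - assert (Heq : t - 2 * INR m * tau = - (2 * tau)) by nra. rewrite Heq.
    rewrite E_mid by lra.
    destruct (Phi_props HX (- (2 * tau)) ph ph1 ph2 ltac:(lra) Hphi (k + 2 * m)) as [_ [_ Hz]].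
    apply Hz. lia.
Qed.

Lemma Sx_init {X : NormedSpace} (HX : complete X) (O : X -> X) (tau : R) (ph ph1 ph2 : R -> X) k N t :
  in_LX O -> tau > 0 -> is_C2_on (fun s => - (2 * tau) <= s <= 0) ph ph1 ph2 ->
  - (2 * tau) <= t <= 0 ->
  Sx O tau ph ph1 ph2 k N t = Phi (- (2 * tau)) ph ph1 ph2 (S k) t.
Proof.
  intros HO Ht Hphi Htr. unfold Sx. induction N.
  - simpl. rewrite Nat.add_0_r. replace (t - 2 * 0 * tau) with t by ring. rewrite E_mid; auto.
  - rewrite vsum_S. rewrite IHN. rewrite Sx_term_zero; auto. apply ns_add_zero. lra. lia.
Qed.

Lemma Sx0_cont {X : NormedSpace} (HX : complete X) (O : X -> X) (tau : R) (ph ph1 ph2 : R -> X) N :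
  in_LX O -> tau > 0 -> is_C2_on (fun s => - (2 * tau) <= s <= 0) ph ph1 ph2 ->
  continuous_on (fun s => - (2 * tau) <= s) (Sx O tau ph ph1 ph2 0 N).
Proof.
  intros HO Ht Hphi. unfold Sx.
  apply (cont_vsum _ (fun m s => opow O (2 * m) (E (- (2 * tau)) ph ph1 ph2 (0 + 2 * m) (s - 2 * INR m * tau)))).
  intros m _. apply cont_lin. apply opow_LX; auto. destruct m as [|m].
  - apply (cont_shift (fun s => - (2 * tau) <= s)). intros s Hs; simpl; lra. apply E_cont_ge; auto. lra.
  - apply (cont_shift (fun _ => True)). auto. apply E_cont_all; auto. lra. lia.
Qed.

Lemma x_deriv {X : NormedSpace} (HX : complete X) (O : X -> X) (tau : R) (ph ph1 ph2 : R -> X) t :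
  in_LX O -> tau > 0 -> is_C2_on (fun s => - (2 * tau) <= s <= 0) ph ph1 ph2 -> - (2 * tau) <= t ->
  has_deriv_within (fun s => - (2 * tau) <= s) (xsol O tau ph ph1 ph2) t (xdsol O tau ph ph1 ph2 t).
Proof.
  intros HO Ht Hphi Hta. set (N := bnd tau (Rabs t + 1)).
  apply (deriv_ext_loc _ (Sx O tau ph ph1 ph2 1 N) _ _ _ 1). lra.
  intros s _ Hs. symmetry. apply xsol_eq; auto. assert (H := loc_bound tau t s Ht Hs). fold N in H. lra. auto.
  rewrite (xdsol_eq O tau ph ph1 ph2 N t); auto. apply Sx1_deriv; auto.
  assert (H := loc_bound tau t t Ht ltac:(rewrite Rminus_diag_eq, Rabs_R0; lra)). fold N in H. lra.
Qed.

Lemma x_cont {X : NormedSpace} (HX : complete X) (O : X -> X) (tau : R) (ph ph1 ph2 : R -> X) :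
  in_LX O -> tau > 0 -> is_C2_on (fun s => - (2 * tau) <= s <= 0) ph ph1 ph2 ->
  continuous_on (fun s => - (2 * tau) <= s) (xsol O tau ph ph1 ph2).
Proof.
  intros HO Ht Hphi. apply (cont_of_deriv _ _ (xdsol O tau ph ph1 ph2)). intros t Hta. apply x_deriv; auto.
Qed.

Lemma xd_cont {X : NormedSpace} (HX : complete X) (O : X -> X) (tau : R) (ph ph1 ph2 : R -> X) :
  in_LX O -> tau > 0 -> is_C2_on (fun s => - (2 * tau) <= s <= 0) ph ph1 ph2 ->
  continuous_on (fun s => - (2 * tau) <= s) (xdsol O tau ph ph1 ph2).
Proof.
  intros HO Ht Hphi. apply cont_loc. intros t Hta. set (N := bnd tau (Rabs t + 1)).
  exists (Sx O tau ph ph1 ph2 0 N), 1. split. lra. split.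
  intros s _ Hs. apply xdsol_eq; auto. assert (H := loc_bound tau t s Ht Hs). fold N in H. lra.
  apply Sx0_cont; auto.
Qed.

Lemma dSx_0 {X : NormedSpace} (O : X -> X) (tau : R) (ph ph1 ph2 : R -> X) t : dSx O tau ph ph1 ph2 0 t = ns_zero.
Proof. reflexivity. Qed.
Lemma dSx_S {X : NormedSpace} (O : X -> X) (tau : R) (ph ph1 ph2 : R -> X) m t : dSx O tau ph ph1 ph2 (S m) t =
  opow O (2 * S m) (E (- (2 * tau)) ph ph1 ph2 (1 + 2 * m) (t - 2 * INR (S m) * tau)).
Proof. reflexivity. Qed.
Lemma opow_SS {X : NormedSpace} (O : X -> X) k v : opow O (S (S k)) v = O (O (opow O k v)).
Proof. reflexivity. Qed.

Lemma xd_deriv {X : NormedSpace} (HX : complete X) (O : X -> X) (tau : R) (ph ph1 ph2 : R -> X) t :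
  in_LX O -> tau > 0 -> is_C2_on (fun s => - (2 * tau) <= s <= 0) ph ph1 ph2 -> 0 <= t ->
  has_deriv_within (fun s => 0 <= s) (xdsol O tau ph ph1 ph2) t (O (O (xsol O tau ph ph1 ph2 (t - 2 * tau)))).
Proof.
  intros HO Ht Hphi Ht0. set (N1 := (Z.to_nat (up ((Rabs t + 1) / tau)) + 5)%nat).
  assert (HN : bnd tau (Rabs t + 1) = S N1).
  { unfold bnd, N1. rewrite (Rabs_right (Rabs t + 1)) by (assert (H0 := Rabs_pos t); lra). lia. }
  apply (deriv_ext_loc _ (Sx O tau ph ph1 ph2 0 (S N1)) _ _ _ 1). lra.
  intros s _ Hs. symmetry. apply xdsol_eq; auto. assert (H := loc_bound tau t s Ht Hs). rewrite HN in H. lra. auto.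
  eapply deriv_ext_v; [|apply Sx0_deriv; auto].
  rewrite vsum_shift. rewrite dSx_0, vadd0l.
  assert (HN1 : INR N1 >= Rabs (t - 2 * tau) / tau + 2).
  { assert (H := loc_bound tau t t Ht ltac:(rewrite Rminus_diag_eq, Rabs_R0; lra)). rewrite HN, S_INR in H.
    assert (Rabs (t - 2 * tau) <= Rabs t + 2 * tau).
    { unfold Rminus. eapply Rle_trans. apply Rabs_triang. rewrite Rabs_Ropp, (Rabs_right (2 * tau)); lra. }
    assert (Rabs (t - 2 * tau) / tau <= (Rabs t + 2 * tau) / tau).
    { apply Rmult_le_compat_r. apply Rlt_le, Rinv_0_lt_compat; auto. auto. }
    assert ((Rabs t + 2 * tau) / tau = Rabs t / tau + 2) by (field; lra). lra. }
  rewrite (xsol_eq O tau ph ph1 ph2 N1) by auto. unfold Sx.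
  destruct HO as [HL HB]. rewrite !lin_vsum by auto. apply vsum_ext. intros m _.
  rewrite dSx_S. replace (2 * S m)%nat with (S (S (2 * m))) by lia. rewrite opow_SS.
  replace (t - 2 * INR (S m) * tau) with (t - 2 * tau - 2 * INR m * tau) by (rewrite S_INR; ring). reflexivity.
Qed.

Lemma x_init {X : NormedSpace} (HX : complete X) (O : X -> X) (tau : R) (ph ph1 ph2 : R -> X) t :
  in_LX O -> tau > 0 -> is_C2_on (fun s => - (2 * tau) <= s <= 0) ph ph1 ph2 -> - (2 * tau) <= t <= 0 ->
  xsol O tau ph ph1 ph2 t = ph t.
Proof. intros. unfold xsol. rewrite Sx_init; auto. Qed.

Lemma xd_init {X : NormedSpace} (HX : complete X) (O : X -> X) (tau : R) (ph ph1 ph2 : R -> X) t :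
  in_LX O -> tau > 0 -> is_C2_on (fun s => - (2 * tau) <= s <= 0) ph ph1 ph2 -> - (2 * tau) <= t <= 0 ->
  xdsol O tau ph ph1 ph2 t = ph1 t.
Proof. intros. unfold xdsol. rewrite Sx_init; auto. Qed.

Lemma xsol_classical {X : NormedSpace} (HX : complete X) (O : X -> X) (tau : R) (ph ph1 ph2 : R -> X) :
  in_LX O -> tau > 0 -> is_C2_on (fun s => - (2 * tau) <= s <= 0) ph ph1 ph2 ->
  classical_solution tau O (fun _ => ns_zero) ph (xsol O tau ph ph1 ph2).
Proof.
  intros HO Ht Hphi. assert (Hphi' := Hphi). destruct Hphi' as [[Hd0 Hc0] [Hd1 Hc1]].
  exists (xdsol O tau ph ph1 ph2), ph2, (fun t => O (O (xsol O tau ph ph1 ph2 (t - 2 * tau)))).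
  split; [|split; [|split; [|split]]].
  - split. intros t Ht'. apply x_deriv; auto. apply xd_cont; auto.
  - split; split.
    + intros t Ht'. rewrite xd_init by auto. apply (deriv_ext _ ph). intros s Hs. symmetry. apply x_init; auto.
      auto. apply Hd0; auto.
    + apply (cont_ext _ ph1). intros s Hs. symmetry. apply xd_init; auto. auto.
    + intros t Ht'. apply (deriv_ext _ ph1). intros s Hs. symmetry. apply xd_init; auto.
      auto. apply Hd1; auto.
    + auto.
  - split; split.
    + intros t Ht'. apply (deriv_mono (fun s => - (2 * tau) <= s)). intros s Hs. simpl in *; lra.
      apply x_deriv; auto. simpl in Ht'; lra.
    + apply (cont_mono (fun s => - (2 * tau) <= s)). intros s Hs. simpl in *; lra. apply xd_cont; auto.
    + intros t Ht'. apply xd_deriv; auto.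
    + apply cont_lin; auto. apply cont_lin; auto. apply (cont_shift (fun s => - (2 * tau) <= s)).
      intros s Hs. simpl in *; lra. apply x_cont; auto.
  - intros t _. apply vsub_self.
  - intros t Ht'. apply x_init; auto.
Qed.

Lemma const_of_deriv0 {X : NormedSpace} (D : R -> Prop) (G G' : R -> X) s t :
  s <= t -> (forall r, s <= r <= t -> D r) ->
  (forall r, s <= r <= t -> has_deriv_within D G r (G' r)) ->
  (forall r, s <= r <= t -> G' r = ns_zero) -> G t = G s.
Proof.
  intros Hst HD Hd H0. apply vsub_eq. apply vnorm_eq0.
  assert (H := mvi D G G' ns_zero 0 s t Hst HD Hd).
  rewrite vscal0r, vsub0, Rmult_0_l in H.
  assert (H' : forall r, s <= r <= t -> ns_norm (ns_sub (G' r) ns_zero) <= 0).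
  { intros r Hr. rewrite H0, vsub_self, vnorm0 by auto. lra. }
  specialize (H H'). assert (H2 := vnorm_nonneg (ns_sub (G t) (G s))). lra.
Qed.

Lemma deriv_zero_left {X : NormedSpace} (D : R -> Prop) (f : R -> X) c v eta :
  eta > 0 -> (forall s, c - eta <= s <= c -> D s /\ f s = ns_zero) -> has_deriv_within D f c v -> v = ns_zero.
Proof.
  intros Heta Hz Hd. apply vnorm_small0. intros e He.
  destruct (Hd e He) as [d [Hd0 Hd']].
  set (h := - (Rmin d eta / 2)).
  assert (Hm1 := Rmin_l d eta). assert (Hm2 := Rmin_r d eta).
  assert (Hmp : Rmin d eta > 0) by (apply Rmin_glb_lt; lra).
  assert (Hh : h < 0) by (unfold h; lra).
  specialize (Hd' h ltac:(lra) ltac:(rewrite Rabs_left; unfold h; lra) ltac:(apply Hz; unfold h; lra)).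
  rewrite (proj2 (Hz (c + h) ltac:(unfold h; lra))), (proj2 (Hz c ltac:(lra))) in Hd'.
  rewrite vsub_self, vsub_0l, vnorm_opp, ns_norm_scal in Hd'.
  assert (Rabs h > 0) by (apply Rabs_pos_lt; lra).
  assert (Hv := vnorm_nonneg v). nra.
Qed.

Lemma uniqueness {X : NormedSpace} (O : X -> X) (tau : R) (ph x y : R -> X) :
  in_LX O -> tau > 0 ->
  classical_solution tau O (fun _ => ns_zero) ph x -> classical_solution tau O (fun _ => ns_zero) ph y ->
  forall t, - (2 * tau) <= t -> y t = x t.
Proof.
  intros HO Ht [xd [xdn [xdp [[Hx1d Hx1c] [_ [[_ [Hx3d _]] [Hxeq Hxi]]]]]]]
               [yd [ydn [ydp [[Hy1d Hy1c] [_ [[_ [Hy3d _]] [Hyeq Hyi]]]]]]].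
  assert (Hind : forall n, forall t, - (2 * tau) <= t <= 2 * INR n * tau -> y t = x t).
  { induction n as [|n IH]; intros t Hta.
    - simpl in Hta. rewrite Hxi, Hyi; auto. lra. lra.
    - set (c := 2 * INR n * tau).
      assert (Hc0 : 0 <= c) by (unfold c; assert (H := pos_INR n); nra).
      assert (HcS : 2 * INR (S n) * tau = c + 2 * tau) by (unfold c; rewrite S_INR; ring).
      rewrite HcS in Hta.
      destruct (Rle_or_lt t c) as [Htc|Htc]. apply IH; unfold c in *; lra.
      assert (Hdc : ns_sub (yd c) (xd c) = ns_zero).
      { apply (deriv_zero_left (fun s => - (2 * tau) <= s) (fun s => ns_sub (y s) (x s)) c _ (2 * tau)). lra.
        intros s Hs. split. lra. rewrite IH. apply vsub_self. unfold c in *; lra.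
        apply deriv_sub. apply Hy1d; lra. apply Hx1d; lra. }
      assert (Hdd : forall r, c <= r <= t -> ns_sub (yd r) (xd r) = ns_zero).
      { intros r Hr. rewrite <- Hdc.
        apply (const_of_deriv0 (fun s => 0 <= s) (fun s => ns_sub (yd s) (xd s)) (fun s => ns_sub (ydp s) (xdp s))).
        lra. intros; simpl; lra.
        intros r' Hr'. apply deriv_sub. apply Hy3d; simpl; lra. apply Hx3d; simpl; lra.
        intros r' Hr'. assert (E1 := Hyeq r' ltac:(lra)). assert (E2 := Hxeq r' ltac:(lra)). cbv beta in E1, E2. apply vsub_eq in E1. apply vsub_eq in E2.
        rewrite E1, E2. rewrite IH. apply vsub_self. unfold c in *; lra. }
      assert (Hz : ns_sub (y t) (x t) = ns_sub (y c) (x c)).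
      { apply (const_of_deriv0 (fun s => - (2 * tau) <= s) (fun s => ns_sub (y s) (x s)) (fun s => ns_sub (yd s) (xd s))).
        lra. intros; simpl; lra.
        intros r Hr. apply deriv_sub. apply Hy1d; simpl; lra. apply Hx1d; simpl; lra.
        exact Hdd. }
      rewrite (IH c) in Hz by (unfold c in *; lra). rewrite vsub_self in Hz. apply vsub_eq; auto. }
  intros t Hta. destruct (INR_unbounded (t / (2 * tau))) as [n Hn].
  apply (Hind n). split; auto.
  assert (t / (2 * tau) * (2 * tau) = t) by (field; lra).
  assert (0 <= (INR n - t / (2 * tau)) * (2 * tau)) by (apply Rmult_le_pos; lra). nra.
Qed.

Definition cp (tau : R) (j : nat) (u : R) : R := (Rmax 0 (u - (INR j - 1) * tau)) ^ j / INR (fact j).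

Lemma pow0S (k : nat) : 0 ^ (S k) = 0.
Proof. simpl. ring. Qed.

Lemma cp_zero tau j u : (1 <= j)%nat -> u - (INR j - 1) * tau <= 0 -> cp tau j u = 0.
Proof.
  intros Hj Hu. unfold cp. rewrite Rmax_left by lra. destruct j. lia. rewrite pow0S. unfold Rdiv. ring.
Qed.

Lemma cp_pos tau j u : 0 <= u - (INR j - 1) * tau ->
  cp tau j u = (u - (INR j - 1) * tau) ^ j / INR (fact j).
Proof. intros H. unfold cp. rewrite Rmax_right by lra. reflexivity. Qed.

Lemma exp_expand {X : NormedSpace} (tau : R) (A : X -> X) (u : R) (v : X) N :
  tau > 0 -> - tau <= u -> (0 <= u -> INR N >= u / tau + 1) ->
  exp_tau tau A u v = vsum (fun j => ns_scal (cp tau j u) (opow A j v)) N.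
Proof.
  intros Ht Hu HN. unfold exp_tau. destruct (Rlt_dec u (- tau)). lra.
  destruct (Rlt_dec u 0) as [Hu0|Hu0].
  - rewrite (vsum_extend _ 0). simpl. unfold cp. simpl. replace (1 / 1) with 1 by field. symmetry. apply ns_scal_one.
    lia. intros i Hi _. rewrite cp_zero. apply vscal0. lia.
    assert (INR i >= 1) by (apply Rle_ge; replace 1 with (INR 1) by reflexivity; apply le_INR; lia). nra.
  - specialize (HN ltac:(lra)).
    assert (Hup0 : (0 <= up (u / tau))%Z).
    { apply up_pos. apply Rmult_le_pos. lra. apply Rlt_le, Rinv_0_lt_compat; lra. }
    destruct (archimed (u / tau)) as [Ha1 Ha2].
    set (k := Z.to_nat (up (u / tau))).
    assert (Hk : INR k = IZR (up (u / tau))) by (apply INR_toNat; auto).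
    assert (Hut : u / tau * tau = u) by (field; lra).
    assert (HkN : (k <= N)%nat).
    { apply INR_le. lra. }
    rewrite (vsum_extend _ k N); auto.
    + apply vsum_ext. intros j Hj. rewrite cp_pos. reflexivity.
      assert (INR j <= INR k) by (apply le_INR; auto).
      assert (0 <= (u / tau + 1 - INR j) * tau) by (apply Rmult_le_pos; lra). nra.
    + intros i Hi _. rewrite cp_zero. apply vscal0. lia.
      assert (INR i >= INR k + 1) by (rewrite <- S_INR; apply Rle_ge, le_INR; lia).
      assert (0 <= (INR i - 1 - u / tau) * tau) by (apply Rmult_le_pos; lra). nra.
Qed.

Lemma vsum_par {X : NormedSpace} (f : nat -> X) M :
  vsum f (S (2 * M)) = vsum (fun m => ns_add (f (2 * m)%nat) (f (S (2 * m)))) M.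
Proof.
  induction M. reflexivity.
  replace (S (2 * S M)) with (S (S (S (2 * M)))) by lia.
  change (vsum f (S (S (S (2 * M))))) with (ns_add (ns_add (vsum f (S (2 * M))) (f (S (S (2 * M))))) (f (S (S (S (2 * M)))))).
  rewrite IHM. change (vsum (fun m => ns_add (f (2 * m)%nat) (f (S (2 * m)))) (S M)) with
    (ns_add (vsum (fun m => ns_add (f (2 * m)%nat) (f (S (2 * m)))) M) (ns_add (f (2 * S M)%nat) (f (S (2 * S M))))).
  replace (2 * S M)%nat with (S (S (2 * M))) by lia. rewrite ns_add_assoc. reflexivity.
Qed.

Lemma m1_even m : (-1) ^ (2 * m) = 1.
Proof. rewrite pow_mult. replace ((-1) ^ 2) with 1 by ring. apply pow1. Qed.
Lemma m1_odd m : (-1) ^ (S (2 * m)) = -1.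
Proof. change ((-1) ^ (S (2 * m))) with (-1 * (-1) ^ (2 * m)). rewrite m1_even. ring. Qed.

Lemma x2_expand {X : NormedSpace} (tau : R) (O Oinv : X -> X) (u : R) (v : X) M :
  in_LX O -> in_LX Oinv -> (forall w, Oinv (O w) = w) -> tau > 0 ->
  (0 <= u -> INR (S (2 * M)) >= u / tau + 1) ->
  x2 tau O Oinv u v = vsum (fun m => ns_scal (cp tau (S (2 * m)) u) (opow O (2 * m) v)) M.
Proof.
  intros HO HOi Hinv Ht HN. unfold x2.
  destruct (Rlt_dec u (- tau)) as [Hu|Hu].
  - unfold exp_tau. destruct (Rlt_dec u (- tau)); [|lra]. rewrite vsub_self, lin_zero, vscal0r by apply HOi.
    symmetry. apply vsum_zero. intros m _. rewrite cp_zero. apply vscal0. lia.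
    rewrite S_INR, mult_INR. simpl (INR 2). assert (0 <= INR m) by apply pos_INR. nra.
  - rewrite (exp_expand tau O u v (S (2 * M))), (exp_expand tau _ u v (S (2 * M))) by (auto; lra).
    rewrite <- vsum_sub, lin_vsum, <- vsum_scal, vsum_par by apply HOi.
    apply vsum_ext. intros m _.
    rewrite !opow_neg by apply HO. rewrite m1_even, m1_odd.
    rewrite !(lin_sub Oinv), !(lin_scal Oinv) by apply (proj1 HOi).
    change (opow O (S (2 * m)) v) with (O (opow O (2 * m) v)). rewrite Hinv.
    vfield.
Qed.

Lemma x1_expand {X : NormedSpace} (tau : R) (O : X -> X) (u : R) (v : X) M :
  in_LX O -> tau > 0 -> - tau <= u ->
  (0 <= u -> INR (S (2 * M)) >= u / tau + 1) ->
  x1 tau O u v = vsum (fun m => ns_scal (cp tau (2 * m) u) (opow O (2 * m) v)) M.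
Proof.
  intros HO Ht Hu HN. unfold x1.
  rewrite (exp_expand tau O u v (S (2 * M))), (exp_expand tau _ u v (S (2 * M))) by (auto; lra).
  rewrite <- vsum_add, <- vsum_scal, vsum_par.
  apply vsum_ext. intros m _.
  rewrite !opow_neg by apply HO. rewrite m1_even, m1_odd.
  vfield.
Qed.


Lemma cont_rmax_pow (v : R) (n : nat) (s : R) :
  continuity_pt (fun s => (Rmax 0 (v - s)) ^ n / INR (fact n)) s.
Proof.
  assert (H1 : continuity_pt (fun s => Rmax 0 (v - s)) s).
  { intros e He. exists e. split; auto. intros x [_ Hx]. simpl in *. unfold R_dist in *.
    apply Rabs_def2 in Hx. apply Rabs_def1;
    unfold Rmax; destruct (Rle_dec 0 (v - x)); destruct (Rle_dec 0 (v - s)); rnle; lra. }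
  assert (H2 : continuity_pt (fun y => y ^ n) (Rmax 0 (v - s))).
  { apply derivable_continuous_pt. apply derivable_pt_pow. }
  assert (H3 := continuity_pt_comp _ _ s H1 H2).
  assert (H4 := continuity_pt_scal _ (/ INR (fact n)) s H3).
  replace (fun s => (Rmax 0 (v - s)) ^ n / INR (fact n)) with
    (mult_real_fct (/ INR (fact n)) (comp (fun y => y ^ n) (fun s => Rmax 0 (v - s)))); auto.
  apply functional_extensionality. intros x. unfold mult_real_fct, comp. unfold Rdiv. ring.
Qed.

Lemma deriv_refl_scalar (g : R -> R) (v s l : R) :
  derivable_pt_lim g (v - s) l -> derivable_pt_lim (fun s => g (v - s)) s (- l).
Proof.
  intros H e He. destruct (H e He) as [d Hd]. exists d. intros h Hh Hhd.
  assert (Hh' : - h <> 0) by lra. assert (Hhd' : Rabs (- h) < d) by (rewrite Rabs_Ropp; auto).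
  specialize (Hd (- h) Hh' Hhd'). replace (v - (s + h)) with (v - s + - h) by ring.
  replace ((g (v - s + - h) - g (v - s)) / h - - l) with (- ((g (v - s + - h) - g (v - s)) / - h - l)) by (field; auto).
  rewrite Rabs_Ropp. auto.
Qed.

Lemma dq_deriv (v s : R) k : derivable_pt_lim (fun s => (v - s) ^ k / INR (fact k)) s (- dmon k (v - s)).
Proof. apply (deriv_refl_scalar (fun y => y ^ k / INR (fact k))). apply dmon_deriv. Qed.

Definition Hs {X : NormedSpace} (a : R) (ph ph1 ph2 : R -> X) (n : nat) (v s : R) : X :=
  vsum (fun k => ns_scal ((v - s) ^ k / INR (fact k)) (Phi a ph ph1 ph2 (S n - k) s)) n.
Definition Gs {X : NormedSpace} (a : R) (ph ph1 ph2 : R -> X) (n : nat) (v s : R) : X :=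
  vsum (fun k => ns_scal ((Rmax 0 (v - s)) ^ k / INR (fact k)) (Phi a ph ph1 ph2 (S n - k) (Rmin s v))) n.

Lemma Hs_deriv {X : NormedSpace} (HX : complete X) (a : R) (ph ph1 ph2 : R -> X) n v s :
  a < 0 -> is_C2_on (fun s => a <= s <= 0) ph ph1 ph2 -> a <= s <= 0 ->
  has_deriv_within (fun s => a <= s <= 0) (Hs a ph ph1 ph2 (S n) v) s
    (ns_scal ((v - s) ^ (S n) / INR (fact (S n))) (ph2 s)).
Proof.
  intros Ha Hphi Hs0.
  eapply deriv_ext_v; [|apply (deriv_vsum _ (fun k s => ns_scal ((v - s) ^ k / INR (fact k)) (Phi a ph ph1 ph2 (S (S n) - k) s))
     (fun k s => ns_add (ns_scal (- dmon k (v - s)) (Phi a ph ph1 ph2 (S (S n) - k) s))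
                        (ns_scal ((v - s) ^ k / INR (fact k)) (Phi a ph ph1 ph2 (S n - k) s))))].
  - rewrite vsum_add. rewrite vsum_shift. rewrite (vsum_S (fun k => ns_scal _ (Phi _ _ _ _ (S n - k) s))).
    simpl dmon at 1. rewrite Ropp_0, vscal0, vadd0l. rewrite Nat.sub_diag.
    assert (Hneg : vsum (fun i => ns_scal (- dmon (S i) (v - s)) (Phi a ph ph1 ph2 (S (S n) - S i) s)) n =
                   ns_opp (vsum (fun k => ns_scal ((v - s) ^ k / INR (fact k)) (Phi a ph ph1 ph2 (S n - k) s)) n)).
    { rewrite vopp_scal, <- vsum_scal. apply vsum_ext. intros i _. simpl dmon.
      rewrite ns_scal_assoc. f_equal. ring. }
    rewrite Hneg. simpl Phi at 3. vring.
  - intros k Hk. apply (deriv_prod _ (fun s => (v - s) ^ k / INR (fact k)) (Phi a ph ph1 ph2 (S (S n) - k))). apply dq_deriv.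
    rewrite (Nat.sub_succ_l k (S n)) by auto.
    destruct (Phi_props HX a ph ph1 ph2 Ha Hphi (S n - k)) as [_ [Hd _]]. apply Hd; auto.
Qed.

Lemma Gs_le {X : NormedSpace} (a : R) (ph ph1 ph2 : R -> X) n v s : s <= v ->
  Gs a ph ph1 ph2 n v s = Hs a ph ph1 ph2 n v s.
Proof.
  intros H. unfold Gs, Hs. rewrite Rmax_right by lra. rewrite Rmin_left by lra. reflexivity.
Qed.

Lemma Gs_ge {X : NormedSpace} (a : R) (ph ph1 ph2 : R -> X) n v s : v <= s ->
  Gs a ph ph1 ph2 n v s = Phi a ph ph1 ph2 (S n) v.
Proof.
  intros H. unfold Gs. rewrite Rmax_left by lra. rewrite Rmin_right by lra.
  destruct n.
  - simpl. replace (1 / 1) with 1 by field. apply ns_scal_one.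
  - rewrite vsum_shift. rewrite vsum_zero. simpl. replace (1 / 1) with 1 by field. rewrite ns_scal_one. apply ns_add_zero.
    intros i _. rewrite pow0S. unfold Rdiv. rewrite Rmult_0_l. apply vscal0.
Qed.

Lemma Gs_deriv {X : NormedSpace} (HX : complete X) (a : R) (ph ph1 ph2 : R -> X) n v s :
  a < 0 -> is_C2_on (fun s => a <= s <= 0) ph ph1 ph2 -> a <= s <= 0 ->
  has_deriv_within (fun s => a <= s <= 0) (Gs a ph ph1 ph2 (S n) v) s
    (ns_scal ((Rmax 0 (v - s)) ^ (S n) / INR (fact (S n))) (ph2 s)).
Proof.
  intros Ha Hphi Hs0.
  destruct (Rlt_or_le s v) as [Hsv|Hsv]; [|destruct (Rle_lt_or_eq_dec _ _ Hsv) as [Hsv'|Hsv']].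
  - rewrite Rmax_right by lra. apply (deriv_ext_loc _ (Hs a ph ph1 ph2 (S n) v) _ _ _ (v - s)). lra.
    intros s' _ Hs'. apply Rabs_def2 in Hs'. symmetry. apply Gs_le. lra. auto.
    apply Hs_deriv; auto.
  - rewrite Rmax_left by lra. rewrite pow0S. unfold Rdiv. rewrite Rmult_0_l, vscal0.
    apply (deriv_ext_loc _ (fun _ => Phi a ph ph1 ph2 (S (S n)) v) _ _ _ (s - v)). lra.
    intros s' _ Hs'. apply Rabs_def2 in Hs'. symmetry. apply Gs_ge. lra. auto. apply deriv_const.
  - subst v. apply deriv_glue.
    + apply (deriv_ext _ (Hs a ph ph1 ph2 (S n) s)). intros s' [_ Hs']. symmetry. apply Gs_le; auto.
      split; auto; lra. replace (Rmax 0 (s - s)) with (s - s) by (rewrite Rmax_right; lra).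
      apply (deriv_mono (fun s => a <= s <= 0)). intros s' [H _]; auto. apply Hs_deriv; auto.
    + rewrite Rminus_diag_eq, Rmax_left, pow0S by lra. unfold Rdiv. rewrite Rmult_0_l, vscal0.
      apply (deriv_ext _ (fun _ => Phi a ph ph1 ph2 (S (S n)) s)). intros s' [_ Hs']. symmetry. apply Gs_ge; auto.
      split; auto; lra. apply deriv_const.
Qed.

Lemma Gs_diff {X : NormedSpace} (HX : complete X) (a : R) (ph ph1 ph2 : R -> X) n v :
  a < 0 -> is_C2_on (fun s => a <= s <= 0) ph ph1 ph2 -> (a <= v \/ (1 <= n)%nat) ->
  ns_sub (Gs a ph ph1 ph2 (S n) v 0) (Gs a ph ph1 ph2 (S n) v a) =
  ns_sub (E a ph ph1 ph2 (S n) v)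
    (ns_add (ns_scal ((Rmax 0 (v - a)) ^ n / INR (fact n)) (ph a))
            (ns_scal ((Rmax 0 (v - a)) ^ (S n) / INR (fact (S n))) (ph1 a))).
Proof.
  intros Ha Hphi Hv.
  destruct (Rlt_or_le v a) as [Hva|Hva].
  - destruct Hv as [Hv|Hv]. lra.
    rewrite !Gs_ge by lra. rewrite E_lt by auto. rewrite Rmax_left by lra.
    destruct n. lia. rewrite !pow0S. unfold Rdiv. rewrite !Rmult_0_l, !vscal0, vsub_self, ns_add_zero, vsub_self.
    reflexivity.
  - rewrite Rmax_right by lra.
    assert (HGa : Gs a ph ph1 ph2 (S n) v a =
       ns_add (ns_scal ((v - a) ^ n / INR (fact n)) (ph a)) (ns_scal ((v - a) ^ (S n) / INR (fact (S n))) (ph1 a))).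
    { rewrite Gs_le by auto. unfold Hs. rewrite vsum_S. f_equal.
      - destruct n as [|n].
        + simpl. reflexivity.
        + rewrite vsum_S. rewrite vsum_zero. rewrite vadd0l.
          replace (S (S (S n)) - S n)%nat with 2%nat by lia. reflexivity.
          intros i Hi. destruct (Phi_props HX a ph ph1 ph2 Ha Hphi (S (S n) - i)) as [_ [_ Hz]].
          replace (S (S (S n)) - i)%nat with (S (S (S n) - i)) by lia. rewrite Hz by lia. apply vscal0r.
      - replace (S (S n) - S n)%nat with 1%nat by lia. reflexivity. }
    rewrite HGa. f_equal.
    destruct (Rlt_or_le v 0) as [Hv0|Hv0].
    + rewrite Gs_ge by lra. rewrite E_mid by lra. reflexivity.
    + rewrite Gs_le by lra. rewrite E_pos by lra. unfold Hs, Ppol. apply vsum_ext. intros i _.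
      replace (v - 0) with v by ring. reflexivity.
Qed.

Lemma identity {X : NormedSpace} (HX : complete X) (O Oinv : X -> X) (tau : R) (ph ph1 ph2 : R -> X) t :
  in_LX O -> in_LX Oinv -> (forall w, Oinv (O w) = w) -> tau > 0 ->
  is_C2_on (fun s => - (2 * tau) <= s <= 0) ph ph1 ph2 -> - (2 * tau) <= t ->
  is_RInt (fun s => x2 tau O Oinv (t - s) (ph2 s)) (- (2 * tau)) 0
    (ns_sub (ns_sub (xsol O tau ph ph1 ph2 t) (x1 tau O (t + tau) (ph (- (2 * tau)))))
            (x2 tau O Oinv (t + 2 * tau) (ph1 (- (2 * tau))))).
Proof.
  intros HO HOi Hinv Ht Hphi Hta.
  set (a := - (2 * tau)) in *.
  set (M := bnd tau (Rabs t + 2 * tau)).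
  assert (HM : INR M >= Rabs t / tau + 8).
  { assert (H := bnd_ge tau (Rabs t + 2 * tau) Ht). fold M in H.
    rewrite (Rabs_right (Rabs t + 2 * tau)) in H by (assert (H0 := Rabs_pos t); lra).
    replace ((Rabs t + 2 * tau) / tau) with (Rabs t / tau + 2) in H by (field; lra). lra. }
  assert (HM2 : INR (S (2 * M)) >= INR M).
  { apply Rle_ge, le_INR. lia. }
  assert (Hat : Rabs t / tau >= t / tau).
  { apply Rle_ge, Rmult_le_compat_r. apply Rlt_le, Rinv_0_lt_compat; auto. apply RRle_abs. }
  assert (Hat0 : Rabs t / tau >= 0).
  { apply Rle_ge, Rmult_le_pos. apply Rabs_pos. apply Rlt_le, Rinv_0_lt_compat; auto. }
  set (Gt := fun s => vsum (fun m => opow O (2 * m) (Gs a ph ph1 ph2 (S (2 * m)) (t - 2 * INR m * tau) s)) M).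
  assert (Hint : forall s, a <= s <= 0 -> x2 tau O Oinv (t - s) (ph2 s) =
     vsum (fun m => opow O (2 * m) (ns_scal ((Rmax 0 (t - 2 * INR m * tau - s)) ^ (S (2 * m)) / INR (fact (S (2 * m)))) (ph2 s))) M).
  { intros s Hs. rewrite (x2_expand tau O Oinv (t - s) (ph2 s) M); auto.
    - apply vsum_ext. intros m _. rewrite lin_scal by apply (opow_LX O (2 * m) HO). unfold cp.
      replace (t - s - (INR (S (2 * m)) - 1) * tau) with (t - 2 * INR m * tau - s) by (rewrite S_INR, mult_INR; simpl (INR 2); ring). reflexivity.
    - intros _. assert ((t - s) / tau <= t / tau + 2).
      { replace (t / tau + 2) with ((t + 2 * tau) / tau) by (field; lra). apply Rmult_le_compat_r.
        apply Rlt_le, Rinv_0_lt_compat; auto. unfold a in Hs. lra. }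
      lra. }
  assert (HR := RInt_of_deriv (fun s => x2 tau O Oinv (t - s) (ph2 s)) Gt a 0 ltac:(unfold a; lra)).
  match type of HR with ?A -> ?B -> is_RInt _ _ _ ?V => assert (Hval : V =
    ns_sub (ns_sub (xsol O tau ph ph1 ph2 t) (x1 tau O (t + tau) (ph a))) (x2 tau O Oinv (t + 2 * tau) (ph1 a))) end.
  { unfold Gt. rewrite <- vsum_sub.
    rewrite (xsol_eq O tau ph ph1 ph2 M t) by (auto; lra).
    rewrite (x1_expand tau O (t + tau) (ph a) M) by (auto; try lra; intros; unfold a in *;
       assert ((t + tau) / tau = t / tau + 1) by (field; lra); lra).
    rewrite (x2_expand tau O Oinv (t + 2 * tau) (ph1 a) M) by (auto; intros;
       assert ((t + 2 * tau) / tau = t / tau + 2) by (field; lra); lra).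
    unfold Sx. rewrite <- !vsum_sub. apply vsum_ext. intros m _.
    assert (HL := opow_LX O (2 * m) HO).
    rewrite <- lin_sub by apply HL.
    rewrite Gs_diff; auto; [|unfold a; lra|].
    - rewrite lin_sub, lin_add, !lin_scal by apply HL. unfold cp.
      replace (t + tau - (INR (2 * m) - 1) * tau) with (t - 2 * INR m * tau - a) by (unfold a; rewrite mult_INR; simpl (INR 2); ring).
      replace (t + 2 * tau - (INR (S (2 * m)) - 1) * tau) with (t - 2 * INR m * tau - a) by (unfold a; rewrite S_INR, mult_INR; simpl (INR 2); ring).
      rewrite vsub_sub. reflexivity.
    - destruct m. left. simpl. lra. right. lia. }
  rewrite <- Hval. apply HR.
  - intros s Hs. eapply deriv_ext_v. symmetry. apply Hint; auto.
    unfold Gt. apply (deriv_vsum _ (fun m s => opow O (2 * m) (Gs a ph ph1 ph2 (S (2 * m)) (t - 2 * INR m * tau) s))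
       (fun m s => opow O (2 * m) (ns_scal ((Rmax 0 (t - 2 * INR m * tau - s)) ^ (S (2 * m)) / INR (fact (S (2 * m)))) (ph2 s)))).
    intros m _. apply deriv_lin. apply opow_LX; auto. apply Gs_deriv; auto. unfold a; lra.
  - apply (cont_ext _ (fun s => vsum (fun m => opow O (2 * m) (ns_scal ((Rmax 0 (t - 2 * INR m * tau - s)) ^ (S (2 * m)) / INR (fact (S (2 * m)))) (ph2 s))) M)).
    intros s Hs. symmetry. apply Hint; auto.
    apply (cont_vsum _ (fun m s => opow O (2 * m) (ns_scal ((Rmax 0 (t - 2 * INR m * tau - s)) ^ (S (2 * m)) / INR (fact (S (2 * m)))) (ph2 s)))).
    intros m _. apply cont_lin. apply opow_LX; auto. apply cont_prod.
    intros s _. apply cont_rmax_pow. destruct Hphi as [_ [_ Hc]]. exact Hc.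
Qed.

Theorem mainTheorem5 (X : NormedSpace) (HX : complete X)
  (O Oinv : X -> X) (HO : is_isomorphism O Oinv)
  (tau : R) (Htau : tau > 0)
  (phi phi' phi'' : R -> X)
  (Hphi : is_C2_on (fun t => - (2 * tau) <= t <= 0) phi phi' phi'') :
  exists x : R -> X,
    classical_solution tau O (fun _ => ns_zero) phi x /\
    (forall y : R -> X, classical_solution tau O (fun _ => ns_zero) phi y ->
       forall t, - (2 * tau) <= t -> y t = x t) /\
    (forall t, - (2 * tau) <= t ->
       is_RInt (fun s => x2 tau O Oinv (t - s) (phi'' s)) (- (2 * tau)) 0
         (ns_sub (ns_sub (x t) (x1 tau O (t + tau) (phi (- (2 * tau)))))
                 (x2 tau O Oinv (t + 2 * tau) (phi' (- (2 * tau)))))).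
Proof.
  destruct HO as [HO1 [HO2 [Hinv _]]].
  assert (Hx := xsol_classical HX O tau phi phi' phi'' HO1 Htau Hphi).
  exists (xsol O tau phi phi' phi''). split; [exact Hx|split].
  - intros y Hy t Ht. apply (uniqueness O tau phi); auto.
  - intros t Ht. apply identity; auto.
Qed.
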